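(* Let $\Gamma$ be a pointclass which contains $\Sigma^0_1$ and $\Pi^0_1$ and is closed under $\vee$, $\&$, and computable substitutions. (i) Let $E,F$ be equivalence relations on spaces $X,Y$. Let $E\times F$ be the equivalence relation on $X\times Y$ with $(x,y)(E\times F)(x',y')$ iff $xEx'$ and $yFy'$. If $E$ and $F$ are both $\Gamma$-graphable, then $E\times F$ is $\Gamma$-graphable; moreover, if $E$ and $F$ are $\Gamma$-graphable with finite diameters $k$ and $\ell$, then $E\times F$ is $\Gamma$-graphable with diameter $\max(k,\ell)$. (ii) For each $i\in\mathbb{N}$ let $E_i$ be an equivalence relation on a space $X_i$, and suppose $X=\prod_iX_i$ is a recursive Polish space. Suppose there are finite-diameter graphs $G_i$ on $X_i$ such that each $G_i$ is a graphing of $E_i$ and the $G_i$ are in $\Gamma$ uniformly in $i$. If the diameters of the $G_i$ are uniformly bounded, then $\prod_iE_i$ is $\forall^\mathbb{N}\Gamma$-graphable with diameter equal to the maximum of the diameters of the $G_i$. In particular, if $E$ is $\Gamma$-graphable with diameter $k$, then the infinite product $\prod_iE$ is $\forall^\mathbb{N}\Gamma$-graphable with diameter $k$.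
   Context: Spaces are recursive Polish spaces. $\prod_iE_i$ is the equivalence relation on $\prod_iX_i$ with $(x_i)(\prod_iE_i)(y_i)$ iff $x_iE_iy_i$ for all $i$. $\forall^\mathbb{N}\Gamma$ is the pointclass obtained by a universal quantifier over $\mathbb{N}$ in front of $\Gamma$ relations. A graphing of $E$ is a simple undirected graph whose connectedness relation equals $E$; $E$ is $\Gamma$-graphable (with diameter $k$) if it has a graphing in $\Gamma$ (in which $k$ is the least integer such that any two connected points are joined by a path of length at most $k$). *)

(* Defs.v *)
From Stdlib Require Import Reals List Arith Cantor.
From Coquelicot Require Import Coquelicot.
Import ListNotations.
Open Scope R_scope.

Inductive prf : Type :=
| PZero : prf
| PSucc : prf
| PProj : nat -> prf
| PComp : prf -> list prf -> prf
| PRec  : prf -> prf -> prf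
| PMin  : prf -> prf.

Inductive eval : prf -> list nat -> nat -> Prop :=
| eZero v : eval PZero v 0
| eSucc v : eval PSucc v (S (hd 0%nat v))
| eProj i v : eval (PProj i) v (nth i v 0%nat)
| eComp f gs v ws y : evals gs v ws -> eval f ws y -> eval (PComp f gs) v y
| eRec0 f g v y : eval f v y -> eval (PRec f g) (0%nat :: v) y
| eRecS f g n v r y :
    eval (PRec f g) (n :: v) r -> eval g (n :: r :: v) y ->
    eval (PRec f g) (S n :: v) y
| eMin f v n :
    eval f (n :: v) 0%nat ->
    (forall m, (m < n)%nat -> exists k, eval f (m :: v) (S k)) ->
    eval (PMin f) v n
with evals : list prf -> list nat -> list nat -> Prop :=
| esNil v : evals [] v []
| esCons g gs v y ys : eval g v y -> evals gs v ys -> evals (g :: gs) v (y :: ys).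

Definition recursive_rel (P : list nat -> Prop) : Prop :=
  exists f : prf, forall v, (P v -> eval f v 1%nat) /\ (~ P v -> eval f v 0%nat).

Definition re_set (W : nat -> Prop) : Prop :=
  exists f : prf, forall n, W n <-> exists y, eval f [n] y.

Definition pair (a b : nat) : nat := Cantor.to_nat (a, b).
Definition unpair (n : nat) : nat * nat := Cantor.of_nat n.

Record space : Type := Space {
  carrier : Type;
  dist : carrier -> carrier -> R;
  pts : nat -> carrier            (* the distinguished dense sequence r_i *)
}.

Definition rat_of (m k : nat) : R := INR m / INR (S k).

Definition is_metric (X : space) : Prop :=
  (forall x y, 0 <= dist X x y) /\
  (forall x y, dist X x y = 0 <-> x = y) /\
  (forall x y, dist X x y = dist X y x) /\
  (forall x y z, dist X x z <= dist X x y + dist X y z).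

Definition is_complete (X : space) : Prop :=
  forall u : nat -> carrier X,
    (forall eps, 0 < eps -> exists N, forall m n, (N <= m)%nat -> (N <= n)%nat ->
        dist X (u m) (u n) < eps) ->
    exists l, forall eps, 0 < eps -> exists N, forall n, (N <= n)%nat ->
        dist X (u n) l < eps.

Definition is_dense_seq (X : space) : Prop :=
  forall x eps, 0 < eps -> exists i, dist X x (pts X i) < eps.

Definition is_RPS (X : space) : Prop :=
  is_metric X /\ is_complete X /\ is_dense_seq X /\
  recursive_rel (fun v => dist X (pts X (nth 0 v 0%nat)) (pts X (nth 1 v 0%nat))
                          < rat_of (nth 2 v 0%nat) (nth 3 v 0%nat)) /\
  recursive_rel (fun v => dist X (pts X (nth 0 v 0%nat)) (pts X (nth 1 v 0%nat))
                          <= rat_of (nth 2 v 0%nat) (nth 3 v 0%nat)).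

Definition nbhd (X : space) (s : nat) (x : carrier X) : Prop :=
  let (i, t) := unpair s in
  let (m, k) := unpair t in
  dist X (pts X i) x < rat_of m k.

Definition natS : space :=
  Space nat (fun a b => if Nat.eqb a b then 0 else 1) (fun n => n).

Definition prodS (X Y : space) : space :=
  Space (carrier X * carrier Y)
        (fun p q => Rmax (dist X (fst p) (fst q)) (dist Y (snd p) (snd q)))
        (fun n => (pts X (fst (unpair n)), pts Y (snd (unpair n)))).

(** Countable product prod_i X_i: metric sup_i 2^-i min(1, d_i), dense
    sequence of finitely-modified points: n codes (L, m) and the i-th
    coordinate (i < L) is r^i_{c_i} with c_i the i-th entry of the list
    coded by m; other coordinates are r^i_0. *)
Definition code_entry (m i : nat) : nat :=
  fst (unpair (Nat.iter i (fun t => snd (unpair t)) m)).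

Definition prodNS (Xs : nat -> space) : space :=
  Space (forall i, carrier (Xs i))
        (fun x y => real (Sup_seq (fun i =>
            Finite ((/ 2) ^ i * Rmin 1 (dist (Xs i) (x i) (y i))))))
        (fun n i => if Nat.ltb i (fst (unpair n))
                    then pts (Xs i) (code_entry (snd (unpair n)) i)
                    else pts (Xs i) 0%nat).

Definition Sigma01 (X : space) (A : carrier X -> Prop) : Prop :=
  exists W, re_set W /\ forall x, A x <-> exists s, W s /\ nbhd X s x.

Definition Pi01 (X : space) (A : carrier X -> Prop) : Prop :=
  Sigma01 X (fun x => ~ A x).

(** f : X -> Y is recursive (computable) iff the relation
    f(x) in N(Y,s) is Sigma^0_1 on X x N, i.e. uniformly in s,
    f^-1 N(Y,s) = union of the N(X,t) with <s,t> in a fixed r.e. set. *)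
Definition computable (X Y : space) (f : carrier X -> carrier Y) : Prop :=
  exists W, re_set W /\
    forall x s, nbhd Y s (f x) <-> exists t, W (pair s t) /\ nbhd X t x.

Definition pointclass : Type := forall X : space, (carrier X -> Prop) -> Prop.

Definition contains_Sigma01 (G : pointclass) : Prop :=
  forall X, is_RPS X -> forall A, Sigma01 X A -> G X A.
Definition contains_Pi01 (G : pointclass) : Prop :=
  forall X, is_RPS X -> forall A, Pi01 X A -> G X A.
Definition pc_closed_or (G : pointclass) : Prop :=
  forall X, is_RPS X -> forall A B, G X A -> G X B -> G X (fun x => A x \/ B x).
Definition pc_closed_and (G : pointclass) : Prop :=
  forall X, is_RPS X -> forall A B, G X A -> G X B -> G X (fun x => A x /\ B x).
Definition pc_closed_comp_subst (G : pointclass) : Prop :=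
  forall X Y, is_RPS X -> is_RPS Y -> forall (f : carrier X -> carrier Y) B,
    computable X Y f -> G Y B -> G X (fun x => B (f x)).

Definition forallN (G : pointclass) : pointclass :=
  fun X A => exists Q : carrier (prodS natS X) -> Prop,
    G (prodS natS X) Q /\ forall x, A x <-> forall n, Q (n, x).

Definition is_equiv {T : Type} (E : T -> T -> Prop) : Prop :=
  (forall x, E x x) /\ (forall x y, E x y -> E y x) /\
  (forall x y z, E x y -> E y z -> E x z).

Definition simple_graph {T : Type} (G : T -> T -> Prop) : Prop :=
  (forall x, ~ G x x) /\ (forall x y, G x y -> G y x).

Inductive gpath {T : Type} (G : T -> T -> Prop) : nat -> T -> T -> Prop :=
| gpath0 x : gpath G 0 x x
| gpathS n x y z : G x y -> gpath G n y z -> gpath G (S n) x z.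

Definition connected {T : Type} (G : T -> T -> Prop) (x y : T) : Prop :=
  exists n, gpath G n x y.

Definition graphing {T : Type} (G E : T -> T -> Prop) : Prop :=
  simple_graph G /\ forall x y, connected G x y <-> E x y.

Definition diam_le {T : Type} (G : T -> T -> Prop) (k : nat) : Prop :=
  forall x y, connected G x y -> exists n, (n <= k)%nat /\ gpath G n x y.

Definition has_diameter {T : Type} (G : T -> T -> Prop) (k : nat) : Prop :=
  diam_le G k /\ forall k', diam_le G k' -> (k <= k')%nat.

Definition graph_in (Gm : pointclass) (X : space)
    (G : carrier X -> carrier X -> Prop) : Prop :=
  Gm (prodS X X) (fun p => G (fst p) (snd p)).

Definition graphable (Gm : pointclass) (X : space)
    (E : carrier X -> carrier X -> Prop) : Prop :=
  exists G, graphing G E /\ graph_in Gm X G.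

Definition graphable_diam (Gm : pointclass) (X : space)
    (E : carrier X -> carrier X -> Prop) (k : nat) : Prop :=
  exists G, graphing G E /\ graph_in Gm X G /\ has_diameter G k.

Definition prod_rel {X Y : Type} (E : X -> X -> Prop) (F : Y -> Y -> Prop)
    (p q : X * Y) : Prop := E (fst p) (fst q) /\ F (snd p) (snd q).

Definition prodN_rel {Xs : nat -> Type} (Es : forall i, Xs i -> Xs i -> Prop)
    (x y : forall i, Xs i) : Prop := forall i, Es i (x i) (y i).

(* Main.v *)
From Pilot Require Import Defs.
From Stdlib Require Import Arith Lia List Cantor.
Import ListNotations.

Fixpoint prf_ind2 (P : prf -> Prop)
  (H0 : P PZero) (H1 : P PSucc) (H2 : forall i, P (PProj i))
  (H3 : forall f gs, P f -> Forall P gs -> P (PComp f gs))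
  (H4 : forall f g, P f -> P g -> P (PRec f g))
  (H5 : forall f, P f -> P (PMin f)) (p : prf) {struct p} : P p :=
  match p with
  | PZero => H0 | PSucc => H1 | PProj i => H2 i
  | PComp f gs => H3 f gs (prf_ind2 P H0 H1 H2 H3 H4 H5 f)
      ((fix aux (l : list prf) : Forall P l :=
         match l with [] => Forall_nil P
         | g :: l' => Forall_cons g (prf_ind2 P H0 H1 H2 H3 H4 H5 g) (aux l') end) gs)
  | PRec f g => H4 f g (prf_ind2 P H0 H1 H2 H3 H4 H5 f) (prf_ind2 P H0 H1 H2 H3 H4 H5 g)
  | PMin f => H5 f (prf_ind2 P H0 H1 H2 H3 H4 H5 f)
  end.

Lemma eval_det : forall p v y, eval p v y -> forall y', eval p v y' -> y = y'.
Proof.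
  intro p; induction p using prf_ind2; intros v y Hy y' Hy'.
  - inversion Hy; inversion Hy'; subst; auto.
  - inversion Hy; inversion Hy'; subst; auto.
  - inversion Hy; inversion Hy'; subst; auto.
  - inversion Hy as [| | |? ? ? ws ? A1 A2| | |]; subst. inversion Hy' as [| | |? ? ? ws0 ? B1 B2| | |]; subst.
    assert (ws = ws0).
    { clear A2 B2 Hy Hy'. revert ws ws0 A1 B1. induction H; intros ws ws0 A B.
      - inversion A; inversion B; subst; auto.
      - inversion A; subst; inversion B; subst. f_equal; eauto. }
    subst; eauto.
  - revert y y' Hy Hy'. destruct v as [|n w]. { intros. inversion Hy. }
    revert w. induction n; intros w y y' Hy Hy'.
    + inversion Hy; inversion Hy'; subst; eauto.
    + inversion Hy; inversion Hy'; subst.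
      assert (r = r0) by eauto. subst. eauto.
  - inversion Hy as [| | | | | |? ? ? Z1 M1]; subst; inversion Hy' as [| | | | | |? ? ? Z2 M2]; subst.
    destruct (lt_eq_lt_dec y y') as [[Hl|He]|Hl]; auto.
    + destruct (M2 _ Hl) as [k Hk]. specialize (IHp _ _ Z1 _ Hk). discriminate.
    + destruct (M1 _ Hl) as [k Hk]. specialize (IHp _ _ Z2 _ Hk). discriminate.
Qed.

Definition computes (p : prf) (F : list nat -> nat) := forall v, eval p v (F v).

Lemma comp_gen f gs F Gs : computes f F -> Forall2 computes gs Gs ->
  computes (PComp f gs) (fun v => F (map (fun G => G v) Gs)).
Proof.
  intros Hf Hg v. econstructor; [|apply Hf].
  induction Hg; simpl; constructor; auto.
Qed.

Lemma comp1 f g F G : computes f F -> computes g G ->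
  computes (PComp f [g]) (fun v => F [G v]).
Proof. intros. apply (comp_gen f [g] F [G]); auto. Qed.
Lemma comp2 f g1 g2 F G1 G2 : computes f F -> computes g1 G1 -> computes g2 G2 ->
  computes (PComp f [g1; g2]) (fun v => F [G1 v; G2 v]).
Proof. intros. apply (comp_gen f [g1; g2] F [G1; G2]); auto. Qed.
Lemma comp4 f g1 g2 g3 g4 F G1 G2 G3 G4 : computes f F -> computes g1 G1 -> computes g2 G2 ->
  computes g3 G3 -> computes g4 G4 ->
  computes (PComp f [g1; g2; g3; g4]) (fun v => F [G1 v; G2 v; G3 v; G4 v]).
Proof. intros. apply (comp_gen f [g1; g2; g3; g4] F [G1; G2; G3; G4]); repeat constructor; auto. Qed.

Lemma computes_ext p F G : computes p F -> (forall v, F v = G v) -> computes p G.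
Proof. intros H E v. rewrite <- E. apply H. Qed.

Lemma c_zero : computes PZero (fun _ => 0). Proof. intro; constructor. Qed.
Lemma c_succ : computes PSucc (fun v => S (hd 0 v)). Proof. intro; constructor. Qed.
Lemma c_proj i : computes (PProj i) (fun v => nth i v 0). Proof. intro; constructor. Qed.

Lemma rec_ok f g F G : computes f F -> computes g G ->
  forall n w, eval (PRec f g) (n :: w) (nat_rect (fun _ => nat) (F w) (fun i r => G (i :: r :: w)) n).
Proof.
  intros Hf Hg n w. induction n; simpl.
  - constructor. apply Hf.
  - econstructor; [apply IHn| apply Hg].
Qed.

Definition recwrap (f g : prf) (args : list prf) := PComp (PRec f g) args.

Lemma c_rec2 f g F G a b A B : computes f F -> computes g G -> computes a A -> computes b B ->
  computes (PComp (PRec f g) [a; b])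
    (fun v => nat_rect (fun _ => nat) (F [B v]) (fun i r => G (i :: r :: [B v])) (A v)).
Proof.
  intros Hf Hg Ha Hb v. econstructor.
  - constructor; [apply Ha|]. constructor; [apply Hb|]. constructor.
  - apply rec_ok; auto.
Qed.
Lemma c_rec1 f g F G a A : computes f F -> computes g G -> computes a A ->
  computes (PComp (PRec f g) [a])
    (fun v => nat_rect (fun _ => nat) (F []) (fun i r => G (i :: r :: [])) (A v)).
Proof.
  intros Hf Hg Ha v. econstructor.
  - constructor; [apply Ha|]. constructor.
  - apply rec_ok; auto.
Qed.

Definition padd := PComp (PRec (PProj 0) (PComp PSucc [PProj 1])) [PProj 0; PProj 1].
Lemma c_add : computes padd (fun v => nth 0 v 0 + nth 1 v 0).
Proof.
  eapply computes_ext. apply c_rec2. apply c_proj. apply comp1; [apply c_succ|apply c_proj].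
  apply c_proj. apply c_proj.
  intro v. simpl. induction (nth 0 v 0); simpl; auto.
Qed.

Definition ppred := PComp (PRec PZero (PProj 0)) [PProj 0].
Lemma c_pred : computes ppred (fun v => pred (nth 0 v 0)).
Proof.
  eapply computes_ext. apply c_rec1. apply c_zero. apply c_proj. apply c_proj.
  intro v. simpl. destruct (nth 0 v 0); simpl; auto.
Qed.

Definition psub := PComp (PRec (PProj 0) (PComp ppred [PProj 1])) [PProj 1; PProj 0].
Lemma c_sub : computes psub (fun v => nth 0 v 0 - nth 1 v 0).
Proof.
  eapply computes_ext. apply c_rec2. apply c_proj. apply comp1; [apply c_pred|apply c_proj].
  apply c_proj. apply c_proj.
  intro v. simpl. generalize (nth 0 v 0). induction (nth 1 v 0); intro a; simpl. lia.
  rewrite IHn. lia.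
Qed.

Definition pmul := PComp (PRec PZero (PComp padd [PProj 1; PProj 2])) [PProj 0; PProj 1].
Lemma c_mul : computes pmul (fun v => nth 0 v 0 * nth 1 v 0).
Proof.
  eapply computes_ext. apply c_rec2. apply c_zero. apply comp2; [apply c_add|apply c_proj|apply c_proj].
  apply c_proj. apply c_proj.
  intro v. simpl. induction (nth 0 v 0); simpl; auto. rewrite IHn. lia.
Qed.

Definition ppow2 := PComp (PRec (PComp PSucc [PZero]) (PComp padd [PProj 1; PProj 1])) [PProj 0].
Lemma c_pow2 : computes ppow2 (fun v => 2 ^ (nth 0 v 0)).
Proof.
  eapply computes_ext. apply c_rec1. apply comp1; [apply c_succ|apply c_zero].
  apply comp2; [apply c_add|apply c_proj|apply c_proj]. apply c_proj.
  intro v. simpl. induction (nth 0 v 0); simpl; auto. rewrite IHn. lia.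
Qed.

Definition tri (n : nat) : nat := nat_rec _ 0 (fun i m => S i + m) n.
Definition ptri := PComp (PRec PZero (PComp padd [PComp PSucc [PProj 0]; PProj 1])) [PProj 0].
Lemma c_tri : computes ptri (fun v => tri (nth 0 v 0)).
Proof.
  eapply computes_ext. apply c_rec1. apply c_zero.
  apply comp2; [apply c_add| apply comp1; [apply c_succ|apply c_proj] |apply c_proj]. apply c_proj.
  intro v. simpl. unfold tri. induction (nth 0 v 0); simpl; auto.
Qed.

Lemma to_nat_tri a b : to_nat (a, b) = b + tri (b + a).
Proof. reflexivity. Qed.

Definition ppair := PComp padd [PProj 1; PComp ptri [PComp padd [PProj 1; PProj 0]]].
Lemma c_pair : computes ppair (fun v => to_nat (nth 0 v 0, nth 1 v 0)).
Proof.
  eapply computes_ext. apply comp2. apply c_add. apply c_proj.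
  apply comp1. apply c_tri. apply comp2. apply c_add. apply c_proj. apply c_proj.
  intro v. simpl. reflexivity.
Qed.

(* unpairing via minimization *)
Definition pminbody := PComp psub [PComp PSucc [PZero];
     PComp psub [PComp ptri [PComp PSucc [PProj 0]]; PProj 1]].
Lemma c_minbody : computes pminbody (fun v => 1 - (tri (S (nth 0 v 0)) - nth 1 v 0)).
Proof.
  eapply computes_ext. apply comp2. apply c_sub. apply comp1. apply c_succ. apply c_zero.
  apply comp2. apply c_sub. apply comp1. apply c_tri. apply comp1. apply c_succ. apply c_proj.
  apply c_proj. intro v; reflexivity.
Qed.

Lemma tri_mono a b : a <= b -> tri a <= tri b.
Proof. induction 1; [lia|]. change (tri (S m)) with (S m + tri m). lia. Qed.

Lemma unpair_sum n : n = snd (of_nat n) + tri (snd (of_nat n) + fst (of_nat n)).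
Proof.
  rewrite <- to_nat_tri. rewrite <- surjective_pairing, cancel_to_of. auto.
Qed.

Definition psum := PMin pminbody.
Lemma c_sum : computes psum (fun v => fst (of_nat (nth 0 v 0)) + snd (of_nat (nth 0 v 0))).
Proof.
  intro v. set (n := nth 0 v 0). pose proof (unpair_sum n) as E.
  set (a := fst (of_nat n)) in *. set (b := snd (of_nat n)) in *.
  constructor.
  - pose proof (c_minbody (a + b :: v)) as C. cbv beta in C.
    replace (1 - (tri (S (nth 0 (a + b :: v) 0)) - nth 1 (a + b :: v) 0)) with 0 in C; auto.
    cbn [nth]. fold n.
    change (tri (S (a+b))) with (S (a+b) + tri (a+b)). replace (b + a) with (a+b) in E by lia. lia.
  - intros m Hm. exists 0. pose proof (c_minbody (m :: v)) as C. cbv beta in C.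
    replace (1 - (tri (S (nth 0 (m :: v) 0)) - nth 1 (m :: v) 0)) with 1 in C; auto.
    cbn [nth]. fold n.
    assert (tri (S m) <= tri (a+b)) by (apply tri_mono; lia).
    replace (b + a) with (a+b) in E by lia. lia.
Qed.

Definition pu2 := PComp psub [PProj 0; PComp ptri [psum]].
Lemma c_u2 : computes pu2 (fun v => snd (of_nat (nth 0 v 0))).
Proof.
  eapply computes_ext. apply comp2. apply c_sub. apply c_proj. apply comp1. apply c_tri. apply c_sum.
  intro v. simpl. pose proof (unpair_sum (nth 0 v 0)). 
  replace (fst (of_nat (nth 0 v 0)) + snd (of_nat (nth 0 v 0))) with
    (snd (of_nat (nth 0 v 0)) + fst (of_nat (nth 0 v 0))) by lia. lia.
Qed.
Definition pu1 := PComp psub [psum; pu2].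
Lemma c_u1 : computes pu1 (fun v => fst (of_nat (nth 0 v 0))).
Proof.
  eapply computes_ext. apply comp2. apply c_sub. apply c_sum. apply c_u2.
  intro v. simpl. lia.
Qed.

Definition ce_iter (i m : nat) := Nat.iter i (fun t => snd (unpair t)) m.
Definition pce := PComp pu1 [PComp (PRec (PProj 0) (PComp pu2 [PProj 1])) [PProj 1; PProj 0]].
Lemma c_ce : computes pce (fun v => code_entry (nth 0 v 0) (nth 1 v 0)).
Proof.
  eapply computes_ext. apply comp1. apply c_u1. apply c_rec2. apply c_proj.
  apply comp1. apply c_u2. apply c_proj. apply c_proj. apply c_proj.
  intro v. simpl. unfold code_entry, unpair. do 2 f_equal.
Qed.

Definition sgl (n a : nat) := Nat.iter n (fun t => pair 0 t) (pair a 0).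
Definition psgl := PComp (PRec (PComp ppair [PProj 0; PZero]) (PComp ppair [PZero; PProj 1])) [PProj 0; PProj 1].
Lemma c_sgl : computes psgl (fun v => sgl (nth 0 v 0) (nth 1 v 0)).
Proof.
  eapply computes_ext. apply c_rec2. apply comp2. apply c_pair. apply c_proj. apply c_zero.
  apply comp2. apply c_pair. apply c_zero. apply c_proj. apply c_proj. apply c_proj.
  intro v. unfold sgl, pair. cbn [nth]. induction (nth 0 v 0); [reflexivity|]. cbn [nat_rect Nat.iter]. rewrite IHn. reflexivity.
Qed.

From Stdlib Require Import ClassicalEpsilon.

Fixpoint pconst (n : nat) : prf := match n with 0 => PZero | S n => PComp PSucc [pconst n] end.
Lemma c_const n : computes (pconst n) (fun _ => n).
Proof.
  induction n; simpl. apply c_zero.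
  eapply computes_ext. apply comp1. apply c_succ. apply IHn. reflexivity.
Qed.

Inductive ex : Type :=
| V (i : nat) | K (n : nat)
| Add (a b : ex) | Sub (a b : ex) | Mul (a b : ex)
| Pr (a b : ex) | U1 (a : ex) | U2 (a : ex) | P2 (a : ex)
| CE (a b : ex) | SG (a b : ex)
| Call (p : prf) (F : list nat -> nat) (a b c d : ex).

Fixpoint sem (e : ex) (v : list nat) : nat :=
  match e with
  | V i => nth i v 0 | K n => n
  | Add a b => sem a v + sem b v
  | Sub a b => sem a v - sem b v
  | Mul a b => sem a v * sem b v
  | Pr a b => pair (sem a v) (sem b v)
  | U1 a => fst (unpair (sem a v))
  | U2 a => snd (unpair (sem a v))
  | P2 a => 2 ^ sem a v
  | CE a b => code_entry (sem a v) (sem b v)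
  | SG a b => sgl (sem a v) (sem b v)
  | Call p F a b c d => F [sem a v; sem b v; sem c v; sem d v]
  end.

Fixpoint cmp (e : ex) : prf :=
  match e with
  | V i => PProj i | K n => pconst n
  | Add a b => PComp padd [cmp a; cmp b]
  | Sub a b => PComp psub [cmp a; cmp b]
  | Mul a b => PComp pmul [cmp a; cmp b]
  | Pr a b => PComp ppair [cmp a; cmp b]
  | U1 a => PComp pu1 [cmp a]
  | U2 a => PComp pu2 [cmp a]
  | P2 a => PComp ppow2 [cmp a]
  | CE a b => PComp pce [cmp a; cmp b]
  | SG a b => PComp psgl [cmp a; cmp b]
  | Call p F a b c d => PComp p [cmp a; cmp b; cmp c; cmp d]
  end.

Fixpoint wf (e : ex) : Prop :=
  match e with
  | V _ | K _ => True
  | Add a b | Sub a b | Mul a b | Pr a b | CE a b | SG a b => wf a /\ wf b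
  | U1 a | U2 a | P2 a => wf a
  | Call p F a b c d => (forall w, eval p w (F w)) /\ wf a /\ wf b /\ wf c /\ wf d
  end.

Lemma cmp_ok e : wf e -> computes (cmp e) (sem e).
Proof.
  induction e; simpl; intros W;
  try (eapply computes_ext; [first [apply comp2|apply comp1]; 
        [first [apply c_add|apply c_sub|apply c_mul|apply c_pair|apply c_u1|apply c_u2|apply c_pow2|apply c_ce|apply c_sgl]
        | first [apply IHe1; tauto | apply IHe2; tauto | apply IHe; tauto] .. ] | reflexivity ]).
  - apply c_proj.
  - apply c_const.
  - destruct W as (Wp & Wa & Wb & Wc & Wd).
    eapply computes_ext. apply comp4. exact Wp. auto. auto. auto. auto. reflexivity.
Qed.

Lemma least_wit (P : nat -> Prop) w : P w -> exists w0, P w0 /\ forall m, m < w0 -> ~ P m.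
Proof.
  induction w as [w IH] using lt_wf_ind. intros Hw.
  destruct (Classical_Prop.classic (exists m, m < w /\ P m)) as [[m [Hm Pm]]|N].
  - apply (IH m Hm Pm).
  - exists w. split; auto. intros m Hm Pm. apply N; eauto.
Qed.

Lemma re_ex e : wf e -> re_set (fun n => exists w, sem e [w; n] <> 0).
Proof.
  intros W. exists (PMin (cmp (Sub (K 1) e))).
  assert (C : computes (cmp (Sub (K 1) e)) (sem (Sub (K 1) e))) by (apply cmp_ok; simpl; auto).
  intro n. split.
  - intros [w Hw].
    destruct (least_wit (fun w => sem e [w; n] <> 0) w Hw) as [w0 [H0 Hl]].
    exists w0. constructor.
    + pose proof (C (w0 :: [n])) as Cy. cbn [sem] in Cy. replace (1 - sem e [w0; n]) with 0 in Cy by lia. exact Cy.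
    + intros m Hm. exists 0. pose proof (C (m :: [n])) as Cy. cbn [sem] in Cy.
      specialize (Hl m Hm). replace (1 - sem e [m; n]) with 1 in Cy by lia. exact Cy.
  - intros [y Hy]. inversion Hy as [| | | | | |? ? ? Z M]; subst. exists y.
    pose proof (C (y :: [n])) as Cy. pose proof (eval_det _ _ _ Z _ Cy) as D. cbn [sem nth] in D. lia.
Qed.

Lemma rec_ex e (P : list nat -> Prop) : wf e ->
  (forall v, (P v -> sem e v = 1) /\ (~ P v -> sem e v = 0)) -> recursive_rel P.
Proof.
  intros W H. exists (cmp e). intro v. pose proof (cmp_ok e W v).
  destruct (H v) as [H1 H2]. split; intro; [rewrite <- H1|rewrite <- H2]; auto.
Qed.

Definition chi (P : list nat -> Prop) (v : list nat) : nat :=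
  if excluded_middle_informative (P v) then 1 else 0.

Lemma chi_rec P : recursive_rel P -> exists p, forall w, eval p w (chi P w).
Proof.
  intros [p Hp]. exists p. intro w. unfold chi. destruct (excluded_middle_informative (P w)); apply Hp; auto.
Qed.

Lemma chi_1 P v : chi P v = 1 <-> P v.
Proof. unfold chi. destruct (excluded_middle_informative (P v)); split; intros; auto; try discriminate; tauto. Qed.
Lemma chi_01 P v : chi P v = 0 \/ chi P v = 1.
Proof. unfold chi. destruct (excluded_middle_informative (P v)); auto. Qed.

Definition Ltb a b := Sub (K 1) (Sub (K 1) (Sub b a)).
Definition Leb a b := Ltb a (Add b (K 1)).
Definition Not a := Sub (K 1) a.
Definition Eqb a b := Mul (Leb a b) (Leb b a).

Lemma sem_Ltb a b v : sem (Ltb a b) v = if Nat.ltb (sem a v) (sem b v) then 1 else 0.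
Proof. unfold Ltb; cbn [sem]. destruct (Nat.ltb_spec (sem a v) (sem b v)); lia. Qed.
Lemma sem_Leb a b v : sem (Leb a b) v = if Nat.leb (sem a v) (sem b v) then 1 else 0.
Proof. unfold Leb, Ltb; cbn [sem]. destruct (Nat.leb_spec (sem a v) (sem b v)); lia. Qed.
Lemma sem_Eqb a b v : sem (Eqb a b) v = if Nat.eqb (sem a v) (sem b v) then 1 else 0.
Proof. unfold Eqb. cbn [sem]. rewrite !sem_Leb. destruct (Nat.eqb_spec (sem a v) (sem b v));
  destruct (Nat.leb_spec (sem a v) (sem b v)); destruct (Nat.leb_spec (sem b v) (sem a v)); lia. Qed.

Lemma u1_pair a b : fst (unpair (pair a b)) = a.
Proof. unfold unpair, pair. rewrite cancel_of_to. auto. Qed.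
Lemma u2_pair a b : snd (unpair (pair a b)) = b.
Proof. unfold unpair, pair. rewrite cancel_of_to. auto. Qed.
Lemma pair_unpair n : pair (fst (unpair n)) (snd (unpair n)) = n.
Proof. unfold unpair, pair. rewrite <- surjective_pairing. apply cancel_to_of. Qed.

From Stdlib Require Import Reals Lra.
Import Pilot.Defs.
Open Scope R_scope.

Notation u1 n := (fst (unpair n)).
Notation u2 n := (snd (unpair n)).

Lemma INR_S_pos k : 0 < INR (S k).
Proof. apply lt_0_INR; lia. Qed.

Lemma rat_lt_iff m k m' k' : rat_of m k < rat_of m' k' <-> (m * S k' < m' * S k)%nat.
Proof.
  unfold rat_of. pose proof (INR_S_pos k). pose proof (INR_S_pos k').
  split; intro H1.
  - apply INR_lt. rewrite !mult_INR.
    apply (Rmult_lt_compat_r (INR (S k) * INR (S k'))) in H1; [|nra].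
    field_simplify in H1; lra.
  - apply lt_INR in H1. rewrite !mult_INR in H1.
    apply (Rmult_lt_reg_r (INR (S k) * INR (S k'))); [nra|].
    field_simplify; lra.
Qed.

Lemma rat_le_iff m k m' k' : rat_of m k <= rat_of m' k' <-> (m * S k' <= m' * S k)%nat.
Proof.
  split; intro H1.
  - destruct (le_lt_dec (m * S k') (m' * S k)); auto.
    apply rat_lt_iff in l. lra.
  - destruct (Rle_lt_dec (rat_of m k) (rat_of m' k')); auto.
    apply rat_lt_iff in r. lia.
Qed.

Lemma rat_0 k : rat_of 0 k = 0.
Proof. unfold rat_of, Rdiv. simpl. ring. Qed.
Lemma rat_1 : rat_of 1 0 = 1.
Proof. unfold rat_of. simpl. field. Qed.
Lemma rat_nonneg m k : 0 <= rat_of m k.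
Proof. unfold rat_of. pose proof (INR_S_pos k). pose proof (pos_INR m).
  apply Rmult_le_pos; auto. left; apply Rinv_0_lt_compat; auto. Qed.
Lemma rat_pos m k : (0 < m)%nat -> 0 < rat_of m k.
Proof. intro. unfold rat_of. pose proof (INR_S_pos k). apply Rdiv_lt_0_compat; auto. apply lt_0_INR; auto. Qed.
Lemma rat_2 m k : rat_of (2 * m) k = 2 * rat_of m k.
Proof. unfold rat_of, Rdiv. rewrite mult_INR. simpl. ring. Qed.

Lemma arch_rat eps : 0 < eps -> exists k, rat_of 1 k < eps.
Proof.
  intro He. destruct (archimed_cor1 eps He) as [N [H1 H2]].
  exists (pred N). unfold rat_of. replace (S (pred N)) with N by lia. simpl. lra.
Qed.

Lemma arch_rat_small eps : 0 < eps -> exists k, rat_of 1 k < eps /\ rat_of 1 k <= 1.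
Proof.
  intro He. destruct (arch_rat eps He) as [k Hk]. exists k. split; auto.
  rewrite <- rat_1. apply rat_le_iff. lia.
Qed.


Lemma metric_of X : is_RPS X -> is_metric X.
Proof. intros [H _]. exact H. Qed.
Lemma dense_of X : is_RPS X -> is_dense_seq X.
Proof. intros (_ & _ & H & _). exact H. Qed.

Lemma d_nonneg X : is_metric X -> forall x y, 0 <= dist X x y.
Proof. intros (H & _). auto. Qed.
Lemma d_refl X : is_metric X -> forall x, dist X x x = 0.
Proof. intros (_ & H & _). intro x. apply H. auto. Qed.
Lemma d_eq X : is_metric X -> forall x y, dist X x y = 0 -> x = y.
Proof. intros (_ & H & _). intros x y. apply H. Qed.
Lemma d_sym X : is_metric X -> forall x y, dist X x y = dist X y x.
Proof. intros (_ & _ & H & _). auto. Qed.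
Lemma d_tri X : is_metric X -> forall x y z, dist X x z <= dist X x y + dist X y z.
Proof. intros (_ & _ & _ & H). auto. Qed.

Lemma nbhd_iff X s x : nbhd X s x <-> dist X (pts X (u1 s)) x < rat_of (u1 (u2 s)) (u2 (u2 s)).
Proof. unfold nbhd. destruct (unpair s) as [i t]. simpl. destruct (unpair t) as [m k]. simpl. tauto. Qed.

Lemma nbhd_code X i m k x : nbhd X (pair i (pair m k)) x <-> dist X (pts X i) x < rat_of m k.
Proof. rewrite nbhd_iff. rewrite !u1_pair, !u2_pair, !u1_pair. tauto. Qed.

Lemma sigma_ex X (A : carrier X -> Prop) e : wf e ->
  (forall x, A x <-> exists s, (exists w, sem e [w; s] <> 0%nat) /\ nbhd X s x) -> Sigma01 X A.
Proof. intros W H. exists (fun n => exists w, sem e [w; n] <> 0%nat). split; auto. apply re_ex; auto. Qed.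

Lemma computable_ex X Y (f : carrier X -> carrier Y) e : wf e ->
  (forall x s, nbhd Y s (f x) <-> exists t, (exists w, sem e [w; pair s t] <> 0%nat) /\ nbhd X t x) ->
  computable X Y f.
Proof. intros W H. exists (fun n => exists w, sem e [w; n] <> 0%nat). split; auto. apply re_ex; auto. Qed.

Lemma dense_rad X : is_RPS X -> forall x m k, (0 < m)%nat -> exists i, dist X (pts X i) x < rat_of m k.
Proof.
  intros H x m k Hm. destruct (dense_of X H x (rat_of m k) (rat_pos m k Hm)) as [i Hi].
  exists i. rewrite (d_sym X (metric_of X H)). auto.
Qed.

Lemma natS_RPS : is_RPS natS.
Proof.
  assert (M : is_metric natS).
  { unfold is_metric; simpl. split; [|split; [|split]].
    - intros x y. destruct (Nat.eqb x y); lra.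
    - intros x y. split.
      + destruct (Nat.eqb_spec x y); auto. lra.
      + intros ->. rewrite Nat.eqb_refl. auto.
    - intros x y. destruct (Nat.eqb_spec x y), (Nat.eqb_spec y x); subst; auto; congruence.
    - intros x y z. destruct (Nat.eqb_spec x z), (Nat.eqb_spec x y), (Nat.eqb_spec y z); subst; try lra; congruence. }
  split; [exact M|]. split; [|split; [|split]].
  - intros u Hu. destruct (Hu (1/2)) as [N HN]; [lra|]. exists (u N).
    intros eps He. exists N. intros n Hn. specialize (HN n N Hn (le_n N)). simpl in *.
    destruct (Nat.eqb (u n) (u N)); lra.
  - intros x eps He. exists x. simpl. rewrite Nat.eqb_refl. auto.
  - apply (rec_ex (Add (Mul (Eqb (V 0) (V 1)) (Ltb (K 0) (V 2)))
                       (Mul (Not (Eqb (V 0) (V 1))) (Ltb (Add (V 3) (K 1)) (V 2))))).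
    { simpl; tauto. }
    intro v. cbn [sem Not]. rewrite sem_Eqb, sem_Ltb, sem_Ltb. cbn [sem pts natS dist].
    set (a := nth 0 v 0%nat). set (b := nth 1 v 0%nat). set (m := nth 2 v 0%nat). set (k := nth 3 v 0%nat).
    destruct (Nat.eqb_spec a b).
    + rewrite <- rat_0 with (k := 0%nat). rewrite rat_lt_iff.
      destruct (Nat.ltb_spec 0 m); split; intros; lia.
    + rewrite <- rat_1. rewrite rat_lt_iff. destruct (Nat.ltb_spec (k+1) m); split; intros; lia.
  - apply (rec_ex (Add (Mul (Eqb (V 0) (V 1)) (K 1))
                       (Mul (Not (Eqb (V 0) (V 1))) (Leb (Add (V 3) (K 1)) (V 2))))).
    { simpl; tauto. }
    intro v. cbn [sem Not]. rewrite sem_Eqb, sem_Leb. cbn [sem pts natS dist].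
    set (a := nth 0 v 0%nat). set (b := nth 1 v 0%nat). set (m := nth 2 v 0%nat). set (k := nth 3 v 0%nat).
    destruct (Nat.eqb_spec a b).
    + pose proof (rat_nonneg m k). split; intros; [lia|lra].
    + rewrite <- rat_1. rewrite rat_le_iff. destruct (Nat.leb_spec (k+1) m); split; intros; lia.
Qed.

Definition qq (s : nat) : R := rat_of (u1 (u2 s)) (u2 (u2 s)).

Lemma nbhd_q X s x : nbhd X s x <-> dist X (pts X (u1 s)) x < qq s.
Proof. apply nbhd_iff. Qed.

Lemma Rmax_le_iff a b c : Rmax a b <= c <-> a <= c /\ b <= c.
Proof. split. intro; split; eapply Rle_trans; eauto; [apply Rmax_l|apply Rmax_r].
  intros []; apply Rmax_lub; auto. Qed.

Lemma nbhd_prod X Y s x y : nbhd (prodS X Y) s (x, y) <->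
  dist X (pts X (u1 (u1 s))) x < qq s /\ dist Y (pts Y (u2 (u1 s))) y < qq s.
Proof. rewrite nbhd_q. cbn. apply Rmax_Rlt. Qed.

Lemma dist_prod_lt X Y c x y q : dist (prodS X Y) (pts (prodS X Y) c) (x, y) < q <->
  dist X (pts X (u1 c)) x < q /\ dist Y (pts Y (u2 c)) y < q.
Proof. cbn [dist pts prodS fst snd]. apply Rmax_Rlt. Qed.

Lemma qq_code c m k : qq (pair c (pair m k)) = rat_of m k.
Proof. unfold qq. rewrite !u2_pair, u1_pair. auto. Qed.

Lemma qq_pos_of X s c x : is_metric X -> dist X c x < qq s -> (0 < u1 (u2 s))%nat.
Proof.
  intros M H. pose proof (d_nonneg X M c x). destruct (u1 (u2 s)) eqn:E; [|lia].
  unfold qq in H. rewrite E, rat_0 in H. lra.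
Qed.

Lemma chi_case P v : (P v /\ chi P v = 1%nat) \/ (~ P v /\ chi P v = 0%nat).
Proof. unfold chi. destruct (excluded_middle_informative (P v)); auto. Qed.

Lemma prodS_RPS X Y : is_RPS X -> is_RPS Y -> is_RPS (prodS X Y).
Proof.
  intros HX HY. pose proof (metric_of X HX) as MX. pose proof (metric_of Y HY) as MY.
  assert (M : is_metric (prodS X Y)).
  { split; [|split; [|split]]; cbn.
    - intros p q. eapply Rle_trans; [apply (d_nonneg X MX)|apply Rmax_l].
    - intros [a b] [c d]; cbn. split.
      + intro H. pose proof (Rmax_l (dist X a c) (dist Y b d)). pose proof (Rmax_r (dist X a c) (dist Y b d)).
        pose proof (d_nonneg X MX a c). pose proof (d_nonneg Y MY b d).
        f_equal; [apply (d_eq X MX)|apply (d_eq Y MY)]; lra.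
      + intros E; inversion E; subst. rewrite (d_refl X MX), (d_refl Y MY). unfold Rmax. destruct (Rle_dec 0 0); auto.
    - intros p q. rewrite (d_sym X MX), (d_sym Y MY). auto.
    - intros p q r. apply Rmax_lub.
      + eapply Rle_trans; [apply (d_tri X MX _ (fst q))|]. apply Rplus_le_compat; apply Rmax_l.
      + eapply Rle_trans; [apply (d_tri Y MY _ (snd q))|]. apply Rplus_le_compat; apply Rmax_r. }
  destruct HX as (_ & CX & DX & LX & EX). destruct HY as (_ & CY & DY & LY & EY).
  split; [exact M|]. split; [|split; [|split]].
  - intros u Hu.
    destruct (CX (fun n => fst (u n))) as [l1 H1].
    { intros eps He. destruct (Hu eps He) as [N HN]. exists N. intros m n Hm Hn.
      eapply Rle_lt_trans; [|apply (HN m n Hm Hn)]. apply Rmax_l. }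
    destruct (CY (fun n => snd (u n))) as [l2 H2].
    { intros eps He. destruct (Hu eps He) as [N HN]. exists N. intros m n Hm Hn.
      eapply Rle_lt_trans; [|apply (HN m n Hm Hn)]. apply Rmax_r. }
    exists (l1, l2). intros eps He. destruct (H1 eps He) as [N1 HN1]. destruct (H2 eps He) as [N2 HN2].
    exists (Nat.max N1 N2). intros n Hn. cbn. apply Rmax_lub_lt; [apply HN1|apply HN2]; lia.
  - intros [a b] eps He. destruct (DX a eps He) as [i Hi]. destruct (DY b eps He) as [j Hj].
    exists (pair i j). cbn [dist pts prodS fst snd]. rewrite u1_pair, u2_pair. apply Rmax_lub_lt; auto.
  - destruct (chi_rec _ LX) as [pX HpX]. destruct (chi_rec _ LY) as [pY HpY].
    eapply (rec_ex (Mul (Call pX _ (U1 (V 0)) (U1 (V 1)) (V 2) (V 3)) (Call pY _ (U2 (V 0)) (U2 (V 1)) (V 2) (V 3)))).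
    { cbn. repeat split; first [exact HpX | exact HpY | auto]. }
    intro v. cbn [sem].
    match goal with |- context [Nat.mul (chi ?P1 ?l1) (chi ?P2 ?l2)] =>
      destruct (chi_case P1 l1) as [[A1 B1]|[A1 B1]]; destruct (chi_case P2 l2) as [[A2 B2]|[A2 B2]];
      rewrite B1, B2; cbn [nth] in A1, A2 end; cbn [dist pts prodS fst snd]; rewrite Rmax_Rlt; split; intros; try tauto; lia.
  - destruct (chi_rec _ EX) as [pX HpX]. destruct (chi_rec _ EY) as [pY HpY].
    eapply (rec_ex (Mul (Call pX _ (U1 (V 0)) (U1 (V 1)) (V 2) (V 3)) (Call pY _ (U2 (V 0)) (U2 (V 1)) (V 2) (V 3)))).
    { cbn. repeat split; first [exact HpX | exact HpY | auto]. }
    intro v. cbn [sem].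
    match goal with |- context [Nat.mul (chi ?P1 ?l1) (chi ?P2 ?l2)] =>
      destruct (chi_case P1 l1) as [[A1 B1]|[A1 B1]]; destruct (chi_case P2 l2) as [[A2 B2]|[A2 B2]];
      rewrite B1, B2; cbn [nth] in A1, A2 end; cbn [dist pts prodS fst snd]; rewrite Rmax_le_iff; split; intros; try tauto; lia.
Qed.

Definition PLe X (v : list nat) := dist X (pts X (nth 0 v 0%nat)) (pts X (nth 1 v 0%nat)) <=
       rat_of (nth 2 v 0%nat) (nth 3 v 0%nat).
Definition PLt X (v : list nat) := dist X (pts X (nth 0 v 0%nat)) (pts X (nth 1 v 0%nat)) <
       rat_of (nth 2 v 0%nat) (nth 3 v 0%nat).
Lemma rle_prf X : is_RPS X -> exists p, forall w, eval p w (chi (PLe X) w).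
Proof. intros (_ & _ & _ & _ & E). apply chi_rec; auto. Qed.
Lemma rlt_prf X : is_RPS X -> exists p, forall w, eval p w (chi (PLt X) w).
Proof. intros (_ & _ & _ & E & _). apply chi_rec; auto. Qed.

Lemma diag_sigma Z : is_RPS Z -> Sigma01 (prodS Z Z) (fun p => fst p <> snd p).
Proof.
  intros HZ. pose proof (metric_of Z HZ) as M. destruct (rle_prf Z HZ) as [pL HL].
  apply (sigma_ex _ _ (Not (Call pL (chi (PLe Z)) (U1 (U1 (V 1))) (U2 (U1 (V 1))) (Mul (K 2) (U1 (U2 (V 1)))) (U2 (U2 (V 1)))))).
  { cbn. repeat split; first [exact HL | auto]. }
  assert (KS : forall w s, sem (Not (Call pL (chi (PLe Z)) (U1 (U1 (V 1))) (U2 (U1 (V 1))) (Mul (K 2) (U1 (U2 (V 1)))) (U2 (U2 (V 1))))) [w; s] <> 0%nat <->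
     ~ (dist Z (pts Z (u1 (u1 s))) (pts Z (u2 (u1 s))) <= 2 * qq s)).
  { intros w s. unfold Not. cbn [sem nth].
    match goal with |- context [chi ?P1 ?l1] => destruct (chi_case P1 l1) as [[A1 B1]|[A1 B1]]; rewrite B1;
      unfold PLe in A1; cbn [nth] in A1 end; rewrite rat_2 in A1; unfold qq; split; intros; try tauto; lia. }
  intros [z z']. cbn [fst snd]. split.
  - intro Hne. assert (Hd : 0 < dist Z z z').
    { destruct (d_nonneg Z M z z') as [H|H]; auto. exfalso. apply Hne. apply (d_eq Z M). auto. }
    destruct (arch_rat (dist Z z z' / 4)) as [k Hk]; [lra|].
    destruct (dense_rad Z HZ z 1 k) as [i Hi]; [lia|].
    destruct (dense_rad Z HZ z' 1 k) as [j Hj]; [lia|].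
    exists (pair (pair i j) (pair 1 k)). split.
    + exists 0%nat. apply KS. rewrite qq_code, u1_pair, u1_pair, u2_pair. intro Hle.
      pose proof (d_tri Z M z (pts Z i) z'). pose proof (d_tri Z M (pts Z i) (pts Z j) z').
      rewrite (d_sym Z M z (pts Z i)) in *. lra.
    + apply nbhd_prod. rewrite qq_code, u1_pair, u1_pair, u2_pair. auto.
  - intros [s [[w Hw] Hn]] Heq. subst z'. apply KS in Hw. apply nbhd_prod in Hn. destruct Hn as [H1 H2].
    apply Hw. pose proof (d_tri Z M (pts Z (u1 (u1 s))) z (pts Z (u2 (u1 s)))).
    rewrite (d_sym Z M z (pts Z (u2 (u1 s)))) in *. lra.
Qed.

Lemma qq_u2 s t : u2 s = u2 t -> qq s = qq t.
Proof. unfold qq. intros ->. auto. Qed.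

Ltac sp := repeat progress (rewrite ?u1_pair, ?u2_pair).
Ltac sph H := repeat progress (rewrite ?u1_pair, ?u2_pair in H).
Ltac eqbs := repeat match goal with |- context [Nat.eqb ?a ?b] => destruct (Nat.eqb_spec a b) end.

Lemma snd_comp N W : is_RPS N -> is_RPS W -> computable (prodS N W) W (fun p => snd p).
Proof.
  intros HN HW. pose proof (metric_of W HW) as M.
  apply (computable_ex _ _ _ (Mul (Eqb (U2 (U1 (U2 (V 1)))) (U1 (U1 (V 1)))) (Eqb (U2 (U2 (V 1))) (U2 (U1 (V 1)))))).
  { unfold Eqb, Leb, Ltb, Not; cbn; tauto. }
  intros [n x] s. cbn [snd]. rewrite nbhd_q. split.
  - intro H. pose proof (qq_pos_of W s _ x M H) as Hp.
    destruct (dense_rad N HN n (u1 (u2 s)) (u2 (u2 s)) Hp) as [a Ha].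
    exists (pair (pair a (u1 s)) (u2 s)). split.
    + exists 0%nat. cbn [sem]. rewrite !sem_Eqb. cbn [sem nth]. sp.
      rewrite !Nat.eqb_refl. lia.
    + apply nbhd_prod. rewrite (qq_u2 _ s) by (rewrite u2_pair; auto). sp. auto.
  - intros [t [[w Hw] Ht]]. cbn [sem] in Hw. rewrite !sem_Eqb in Hw. cbn [sem nth] in Hw.
    sph Hw. apply nbhd_prod in Ht. destruct Ht as [_ Ht].
    revert Hw. eqbs; intro Hw; try lia. rewrite <- (qq_u2 t s) by auto. congruence.
Qed.

Lemma pi1_comp X Y : is_RPS X -> is_RPS Y ->
  computable (prodS (prodS X Y) (prodS X Y)) (prodS X X) (fun p => (fst (fst p), fst (snd p))).
Proof.
  intros HX HY. pose proof (metric_of X HX) as M.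
  apply (computable_ex _ _ _ (Mul (Mul (Eqb (U1 (U1 (U1 (U2 (V 1))))) (U1 (U1 (U1 (V 1)))))
                                       (Eqb (U1 (U2 (U1 (U2 (V 1))))) (U2 (U1 (U1 (V 1))))))
                                  (Eqb (U2 (U2 (V 1))) (U2 (U1 (V 1)))))).
  { unfold Eqb, Leb, Ltb, Not; cbn; tauto. }
  intros [[x y] [x' y']] s. cbn [fst snd]. rewrite nbhd_prod. split.
  - intros [H1 H2]. pose proof (qq_pos_of X s _ x M H1) as Hp.
    destruct (dense_rad Y HY y (u1 (u2 s)) (u2 (u2 s)) Hp) as [a Ha].
    destruct (dense_rad Y HY y' (u1 (u2 s)) (u2 (u2 s)) Hp) as [b Hb].
    exists (pair (pair (pair (u1 (u1 s)) a) (pair (u2 (u1 s)) b)) (u2 s)). split.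
    + exists 0%nat. cbn [sem]. rewrite !sem_Eqb. cbn [sem nth]. sp.
      rewrite !Nat.eqb_refl. lia.
    + apply nbhd_prod. rewrite (qq_u2 _ s) by (rewrite u2_pair; auto). sp.
      split; apply dist_prod_lt; sp; auto.
  - intros [t [[w Hw] Ht]]. cbn [sem] in Hw. rewrite !sem_Eqb in Hw. cbn [sem nth] in Hw.
    sph Hw. apply nbhd_prod in Ht. destruct Ht as [Ht1 Ht2].
    apply dist_prod_lt in Ht1. apply dist_prod_lt in Ht2.
    revert Hw. eqbs; intro Hw; try lia. rewrite <- (qq_u2 t s) by auto. rewrite <- e, <- e0. tauto.
Qed.

Lemma pi2_comp X Y : is_RPS X -> is_RPS Y ->
  computable (prodS (prodS X Y) (prodS X Y)) (prodS Y Y) (fun p => (snd (fst p), snd (snd p))).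
Proof.
  intros HX HY. pose proof (metric_of Y HY) as M.
  apply (computable_ex _ _ _ (Mul (Mul (Eqb (U2 (U1 (U1 (U2 (V 1))))) (U1 (U1 (U1 (V 1)))))
                                       (Eqb (U2 (U2 (U1 (U2 (V 1))))) (U2 (U1 (U1 (V 1))))))
                                  (Eqb (U2 (U2 (V 1))) (U2 (U1 (V 1)))))).
  { unfold Eqb, Leb, Ltb, Not; cbn; tauto. }
  intros [[x y] [x' y']] s. cbn [fst snd]. rewrite nbhd_prod. split.
  - intros [H1 H2]. pose proof (qq_pos_of Y s _ y M H1) as Hp.
    destruct (dense_rad X HX x (u1 (u2 s)) (u2 (u2 s)) Hp) as [a Ha].
    destruct (dense_rad X HX x' (u1 (u2 s)) (u2 (u2 s)) Hp) as [b Hb].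
    exists (pair (pair (pair a (u1 (u1 s))) (pair b (u2 (u1 s)))) (u2 s)). split.
    + exists 0%nat. cbn [sem]. rewrite !sem_Eqb. cbn [sem nth]. sp.
      rewrite !Nat.eqb_refl. lia.
    + apply nbhd_prod. rewrite (qq_u2 _ s) by (rewrite u2_pair; auto). sp.
      split; apply dist_prod_lt; sp; auto.
  - intros [t [[w Hw] Ht]]. cbn [sem] in Hw. rewrite !sem_Eqb in Hw. cbn [sem nth] in Hw.
    sph Hw. apply nbhd_prod in Ht. destruct Ht as [Ht1 Ht2].
    apply dist_prod_lt in Ht1. apply dist_prod_lt in Ht2.
    revert Hw. eqbs; intro Hw; try lia. rewrite <- (qq_u2 t s) by auto. rewrite <- e, <- e0. tauto.
Qed.

From Stdlib Require Import FunctionalExtensionality Eqdep_dec.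

Definition lstep {T : Type} (G : T -> T -> Prop) (a b : T) : Prop := G a b \/ a = b.

Lemma gpath_mono {T} (R R' : T -> T -> Prop) : (forall a b, R a b -> R' a b) ->
  forall n x y, gpath R n x y -> gpath R' n x y.
Proof. intros H n x y P. induction P; econstructor; eauto. Qed.

Lemma gpath_0 {T} (R : T -> T -> Prop) x y : gpath R 0 x y -> x = y.
Proof. intro P. inversion P; auto. Qed.

Lemma gpath_S {T} (R : T -> T -> Prop) n x y : gpath R (S n) x y -> exists z, R x z /\ gpath R n z y.
Proof. intro P. inversion P; subst. eauto. Qed.

Lemma lpath_of {T} (G : T -> T -> Prop) n x y : gpath G n x y -> gpath (lstep G) n x y.
Proof. apply gpath_mono. intros; left; auto. Qed.

Lemma lpath_pad {T} (G : T -> T -> Prop) n x y : gpath (lstep G) n x y ->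
  forall N, (n <= N)%nat -> gpath (lstep G) N x y.
Proof.
  intros P N HN. replace N with ((N - n) + n)%nat by lia. generalize (N - n)%nat. intro j.
  induction j; simpl; auto. econstructor; [right; reflexivity|auto].
Qed.

Lemma lpath_strip {T} (G : T -> T -> Prop) n x y : gpath (lstep G) n x y ->
  exists n', (n' <= n)%nat /\ gpath G n' x y.
Proof.
  intro P. induction P as [x|n x z y [H|H] P IH].
  - exists 0%nat. split; auto. constructor.
  - destruct IH as [n' [Hn Pn]]. exists (S n'). split; [lia|]. econstructor; eauto.
  - subst. destruct IH as [n' [Hn Pn]]. exists n'. split; [lia|auto].
Qed.

Lemma conn_lstep_E {T} (G E : T -> T -> Prop) : graphing G E -> is_equiv E ->
  forall a b, lstep G a b -> E a b.
Proof.
  intros [_ HG] [Er _] a b [H|H].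
  - apply HG. exists 1%nat. econstructor; [exact H|constructor].
  - subst. apply Er.
Qed.

Lemma conn_diam {T} (G E : T -> T -> Prop) k : graphing G E -> has_diameter G k ->
  forall a b, E a b -> gpath (lstep G) k a b.
Proof.
  intros [_ HG] [Hd _] a b Hab. apply HG in Hab. destruct (Hd a b Hab) as [n [Hn P]].
  apply (lpath_pad G n); auto. apply lpath_of; auto.
Qed.

Definition PG2 {X Y : Type} (GX : X -> X -> Prop) (GY : Y -> Y -> Prop) (p q : X * Y) : Prop :=
  p <> q /\ lstep GX (fst p) (fst q) /\ lstep GY (snd p) (snd q).

Lemma lpath2 {X Y} (GX : X -> X -> Prop) (GY : Y -> Y -> Prop) N : forall x x' y y',
  gpath (lstep GX) N x x' -> gpath (lstep GY) N y y' -> gpath (lstep (PG2 GX GY)) N (x, y) (x', y').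
Proof.
  induction N; intros x x' y y' P1 P2.
  - apply gpath_0 in P1. apply gpath_0 in P2. subst. constructor.
  - apply gpath_S in P1. apply gpath_S in P2. destruct P1 as [x1 [S1 P1]]. destruct P2 as [y1 [S2 P2]].
    apply gpathS with (x1, y1); auto.
    destruct (Classical_Prop.classic ((x, y) = (x1, y1))) as [E|E].
    + right; auto.
    + left. split; auto.
Qed.

Lemma lpath2_proj {X Y} (GX : X -> X -> Prop) (GY : Y -> Y -> Prop) n p q :
  gpath (PG2 GX GY) n p q -> gpath (lstep GX) n (fst p) (fst q) /\ gpath (lstep GY) n (snd p) (snd q).
Proof.
  intro P. induction P. split; constructor.
  destruct H as (_ & H1 & H2). destruct IHP. split; econstructor; eauto.
Qed.

Lemma part_i_graph {X Y} (GX EX : X -> X -> Prop) (GY EY : Y -> Y -> Prop) (x0 : X) (y0 : Y) :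
  is_equiv EX -> is_equiv EY -> graphing GX EX -> graphing GY EY ->
  graphing (PG2 GX GY) (prod_rel EX EY) /\
  (forall k l, has_diameter GX k -> has_diameter GY l -> has_diameter (PG2 GX GY) (Nat.max k l)).
Proof.
  intros QX QY HX HY.
  assert (SG : simple_graph (PG2 GX GY)).
  { split.
    - intros p [H _]. auto.
    - intros p q (H1 & H2 & H3). destruct HX as [[_ SX] _]. destruct HY as [[_ SY] _].
      split; [auto|].
      split; [destruct H2; [left; auto|right; auto]|destruct H3; [left; auto|right; auto]]. }
  assert (C1 : forall p q, connected (PG2 GX GY) p q -> prod_rel EX EY p q).
  { intros p q [n P]. induction P.
    - split; [apply (proj1 QX)|apply (proj1 QY)].
    - destruct H as (_ & H1 & H2). destruct IHP as [I1 I2]. split.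
      + eapply (proj2 (proj2 QX)); [|exact I1]. eapply conn_lstep_E; eauto.
      + eapply (proj2 (proj2 QY)); [|exact I2]. eapply conn_lstep_E; eauto. }
  assert (GR : graphing (PG2 GX GY) (prod_rel EX EY)).
  { split; auto. intros p q. split; auto.
    intros [H1 H2]. apply (proj2 HX) in H1. apply (proj2 HY) in H2.
    destruct H1 as [n1 P1]. destruct H2 as [n2 P2].
    destruct p as [x y]; destruct q as [x' y'].
    destruct (lpath_strip (PG2 GX GY) (Nat.max n1 n2) (x, y) (x', y')) as [n' [_ P]].
    { apply lpath2; (eapply lpath_pad; [apply lpath_of; eauto| lia]). }
    exists n'; auto. }
  split; auto.
  intros k l Dk Dl. split.
  - intros [x y] [x' y'] Hc. apply C1 in Hc. destruct Hc as [H1 H2].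
    destruct (lpath_strip (PG2 GX GY) (Nat.max k l) (x, y) (x', y')) as [n' [Hn P]].
    { apply lpath2; (eapply lpath_pad; [eapply conn_diam; eauto| lia]). }
    exists n'; auto.
  - intros k' Hk'.
    assert (k <= k')%nat.
    { apply (proj2 Dk). intros a b Hab.
      assert (Hc : connected (PG2 GX GY) (a, y0) (b, y0)).
      { apply (proj2 GR). split; [apply (proj2 HX); auto|apply (proj1 QY)]. }
      destruct (Hk' _ _ Hc) as [n [Hn P]]. apply lpath2_proj in P. destruct P as [P _].
      destruct (lpath_strip _ _ _ _ P) as [n'' [Hn'' P'']]. exists n''. split; [lia|auto]. }
    assert (l <= k')%nat.
    { apply (proj2 Dl). intros a b Hab.
      assert (Hc : connected (PG2 GX GY) (x0, a) (x0, b)).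
      { apply (proj2 GR). split; [apply (proj1 QX)|apply (proj2 HY); auto]. }
      destruct (Hk' _ _ Hc) as [n [Hn P]]. apply lpath2_proj in P. destruct P as [_ P].
      destruct (lpath_strip _ _ _ _ P) as [n'' [Hn'' P'']]. exists n''. split; [lia|auto]. }
    lia.
Qed.

Definition PGN {I : nat -> Type} (Gs : forall i, I i -> I i -> Prop) (x y : forall i, I i) : Prop :=
  x <> y /\ forall i, lstep (Gs i) (x i) (y i).

Lemma lpathN {I : nat -> Type} (Gs : forall i, I i -> I i -> Prop) N : forall x y,
  (forall i, gpath (lstep (Gs i)) N (x i) (y i)) -> gpath (lstep (PGN Gs)) N x y.
Proof.
  induction N; intros x y H.
  - assert (x = y). { apply functional_extensionality_dep. intro i. apply (gpath_0 _ _ _ (H i)). }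
    subst. constructor.
  - assert (H' : forall i, exists zi, lstep (Gs i) (x i) zi /\ gpath (lstep (Gs i)) N zi (y i)).
    { intro i. apply gpath_S. auto. }
    set (z := fun i => proj1_sig (constructive_indefinite_description _ (H' i))).
    assert (Hz : forall i, lstep (Gs i) (x i) (z i) /\ gpath (lstep (Gs i)) N (z i) (y i)).
    { intro i. unfold z. destruct (constructive_indefinite_description _ (H' i)). auto. }
    apply gpathS with z; [|apply IHN; intro i; apply Hz].
    destruct (Classical_Prop.classic (x = z)) as [E|E]; [right; auto|left; split; auto].
    intro i; apply Hz.
Qed.

Lemma lpathN_proj {I : nat -> Type} (Gs : forall i, I i -> I i -> Prop) n x y :
  gpath (PGN Gs) n x y -> forall i, gpath (lstep (Gs i)) n (x i) (y i).
Proof.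
  intros P i. induction P. constructor. destruct H as [_ H]. econstructor; eauto.
Qed.

Definition upd {I : nat -> Type} (i0 : nat) (u : I i0) (z : forall i, I i) : forall i, I i :=
  fun i => match Nat.eq_dec i0 i with left e => eq_rect i0 I u i e | right _ => z i end.

Lemma upd_eq {I : nat -> Type} i0 (u : I i0) z : upd i0 u z i0 = u.
Proof. unfold upd. destruct (Nat.eq_dec i0 i0) as [e|n]; [|congruence]. rewrite (UIP_refl_nat _ e). auto. Qed.

Lemma part_ii_graph {I : nat -> Type} (Gs Es : forall i, I i -> I i -> Prop) (d : nat -> nat) m i0
  (z : forall i, I i) :
  (forall i, is_equiv (Es i)) -> (forall i, graphing (Gs i) (Es i)) ->
  (forall i, has_diameter (Gs i) (d i)) -> (forall i, (d i <= m)%nat) -> d i0 = m ->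
  graphing (PGN Gs) (prodN_rel Es) /\ has_diameter (PGN Gs) m.
Proof.
  intros QE HG HD Hm Hi0.
  assert (C1 : forall x y, connected (PGN Gs) x y -> prodN_rel Es x y).
  { intros x y [n P]. induction P; intro i.
    - apply (proj1 (QE i)).
    - destruct H as [_ H]. eapply (proj2 (proj2 (QE i))); [|apply IHP]. eapply conn_lstep_E; eauto. }
  assert (C2 : forall x y, prodN_rel Es x y -> exists n, (n <= m)%nat /\ gpath (PGN Gs) n x y).
  { intros x y H. apply lpath_strip. apply lpathN. intro i.
    eapply lpath_pad; [eapply conn_diam; eauto | auto]. }
  assert (GR : graphing (PGN Gs) (prodN_rel Es)).
  { split.
    - split. intros x [H _]. auto.
      intros x y [H1 H2]. split; auto. intro i. destruct (H2 i) as [H|H]; [left|right; auto].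
      apply (proj2 (proj1 (HG i))). auto.
    - intros x y. split; auto. intro H. destruct (C2 x y H) as [n [_ P]]. exists n; auto. }
  split; auto. split.
  - intros x y Hc. apply C2. apply C1. auto.
  - intros k' Hk'. rewrite <- Hi0. apply (proj2 (HD i0)). intros a b Hab.
    assert (Hc : connected (PGN Gs) (upd i0 a z) (upd i0 b z)).
    { apply (proj2 GR). intro i. unfold upd. destruct (Nat.eq_dec i0 i) as [e|n].
      - subst i. simpl. apply (proj2 (HG i0)). auto.
      - apply (proj1 (QE i)). }
    destruct (Hk' _ _ Hc) as [n [Hn P]]. pose proof (lpathN_proj Gs n _ _ P i0) as P'.
    rewrite !upd_eq in P'. destruct (lpath_strip _ _ _ _ P') as [n'' [Hn'' P'']]. exists n''. split; [lia|auto].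
Qed.

Lemma bounded_max (d : nat -> nat) B : (forall i, (d i <= B)%nat) ->
  exists m, (forall i, (d i <= m)%nat) /\ exists i, d i = m.
Proof.
  induction B; intro H.
  - exists 0%nat. split; auto. exists 0%nat. specialize (H 0%nat). lia.
  - destruct (Classical_Prop.classic (exists i, d i = S B)) as [E|E].
    + exists (S B). split; auto.
    + apply IHB. intro i. specialize (H i). destruct (Nat.eq_dec (d i) (S B)); [exfalso; eauto|lia].
Qed.

From Coquelicot Require Import Coquelicot.
Import Pilot.Defs.

Lemma sup_real (u : nat -> R) B : (forall i, u i <= B) ->
  (forall n, u n <= real (Sup_seq (fun i => Finite (u i)))) /\
  (forall C, (forall i, u i <= C) -> real (Sup_seq (fun i => Finite (u i))) <= C).
Proof.
  intros HB.
  assert (U : forall C, (forall i, u i <= C) -> Rbar_le (Sup_seq (fun i => Finite (u i))) (Finite C)).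
  { intros C HC. apply Rbar_not_lt_le. intro H. apply Sup_seq_minor_lt in H. destruct H as [n Hn].
    simpl in Hn. specialize (HC n). lra. }
  assert (L : forall n, Rbar_le (Finite (u n)) (Sup_seq (fun i => Finite (u i)))).
  { intro n. apply Sup_seq_minor_le with n. apply Rbar_le_refl. }
  pose proof (U B HB) as UB. pose proof (L 0%nat) as L0.
  destruct (Sup_seq (fun i => Finite (u i))) as [s| |] eqn:E; simpl in *; try contradiction.
  split.
  - intro n. specialize (L n). simpl in L. auto.
  - intros C HC. specialize (U C HC). simpl in U. auto.
Qed.

Definition cterm (Xs : nat -> space) (x y : forall i, carrier (Xs i)) (i : nat) : R :=
  (/ 2) ^ i * Rmin 1 (dist (Xs i) (x i) (y i)).

Lemma pow_half_pos i : 0 < (/ 2) ^ i.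
Proof. apply pow_lt. lra. Qed.
Lemma pow_half_le1 i : (/ 2) ^ i <= 1.
Proof. induction i; simpl. lra. pose proof (pow_half_pos i). nra. Qed.

Lemma cterm_le1 Xs x y i : cterm Xs x y i <= 1.
Proof.
  unfold cterm. pose proof (pow_half_pos i). pose proof (pow_half_le1 i).
  assert (Rmin 1 (dist (Xs i) (x i) (y i)) <= 1) by apply Rmin_l.
  destruct (Rle_dec 0 (Rmin 1 (dist (Xs i) (x i) (y i)))).
  - nra.
  - nra.
Qed.

Lemma distN_eq Xs x y : dist (prodNS Xs) x y = real (Sup_seq (fun i => Finite (cterm Xs x y i))).
Proof. reflexivity. Qed.

Lemma coord_le Xs x y n : cterm Xs x y n <= dist (prodNS Xs) x y.
Proof. rewrite distN_eq. apply (sup_real _ 1 (cterm_le1 Xs x y)). Qed.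

Lemma pow2_half n : 2 ^ n * (/ 2) ^ n = 1.
Proof. rewrite <- Rpow_mult_distr. replace (2 * / 2) with 1 by field. apply pow1. Qed.

Lemma coord_lt Xs x y n q : dist (prodNS Xs) x y < q -> 2 ^ n * q <= 1 ->
  dist (Xs n) (x n) (y n) < 2 ^ n * q.
Proof.
  intros H1 H2. pose proof (coord_le Xs x y n) as H. unfold cterm in H.
  pose proof (pow2_half n). pose proof (pow_half_pos n).
  assert (Hm : Rmin 1 (dist (Xs n) (x n) (y n)) < 2 ^ n * q).
  { assert (2 ^ n * ((/ 2) ^ n * Rmin 1 (dist (Xs n) (x n) (y n))) < 2 ^ n * q).
    { apply Rmult_lt_compat_l. apply pow_lt; lra. lra. }
    rewrite <- Rmult_assoc, H0, Rmult_1_l in H4. auto. }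
  unfold Rmin in Hm. destruct (Rle_dec 1 (dist (Xs n) (x n) (y n))); lra.
Qed.

Lemma rmin_sub a b c : 0 <= b -> 0 <= c -> a <= b + c -> Rmin 1 a <= Rmin 1 b + Rmin 1 c.
Proof. intros. unfold Rmin. destruct (Rle_dec 1 a), (Rle_dec 1 b), (Rle_dec 1 c); lra. Qed.

Lemma rmin_nonneg a : 0 <= a -> 0 <= Rmin 1 a.
Proof. intros. unfold Rmin. destruct (Rle_dec 1 a); lra. Qed.

Definition ent (c n : nat) : nat := if Nat.ltb n (u1 c) then code_entry (u2 c) n else 0%nat.
Lemma pts_N Xs c n : pts (prodNS Xs) c n = pts (Xs n) (ent c n).
Proof. unfold ent. cbn [pts prodNS]. destruct (Nat.ltb n (u1 c)); auto. Qed.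

Definition sgc (n a : nat) : nat := pair (n + 1) (sgl n a).

Lemma sgl_iter n a i : (i <= n)%nat -> Nat.iter i (fun t => u2 t) (sgl n a) = sgl (n - i) a.
Proof.
  induction i; intro H. simpl. rewrite Nat.sub_0_r. auto.
  simpl. rewrite IHi by lia. replace (n - i)%nat with (S (n - S i)) by lia.
  unfold sgl at 1. simpl. fold (sgl (n - S i) a). apply u2_pair.
Qed.

Lemma ent_sgc n a i : ent (sgc n a) i = if Nat.eqb i n then a else 0%nat.
Proof.
  unfold ent, sgc. rewrite u1_pair, u2_pair. destruct (Nat.ltb_spec i (n + 1)).
  - unfold code_entry. pose proof (sgl_iter n a i ltac:(lia)) as SI. rewrite SI.
    destruct (Nat.eqb_spec i n).
    + subst. rewrite Nat.sub_diag. unfold sgl. simpl. apply u1_pair.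
    + replace (n - i)%nat with (S (n - S i)) by lia. unfold sgl. simpl. apply u1_pair.
  - destruct (Nat.eqb_spec i n); auto. lia.
Qed.

Lemma dist_sgc Xs n a b : (forall i, is_metric (Xs i)) ->
  dist (prodNS Xs) (pts (prodNS Xs) (sgc n a)) (pts (prodNS Xs) (sgc n b)) =
  (/ 2) ^ n * Rmin 1 (dist (Xs n) (pts (Xs n) a) (pts (Xs n) b)).
Proof.
  intro M. rewrite distN_eq.
  set (v := (/ 2) ^ n * Rmin 1 (dist (Xs n) (pts (Xs n) a) (pts (Xs n) b))).
  assert (Hv : 0 <= v).
  { unfold v. apply Rmult_le_pos. left; apply pow_half_pos. apply rmin_nonneg. apply d_nonneg; auto. }
  assert (T : forall i, cterm Xs (pts (prodNS Xs) (sgc n a)) (pts (prodNS Xs) (sgc n b)) i =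
               if Nat.eqb i n then v else 0).
  { intro i. unfold cterm. rewrite !pts_N, !ent_sgc. destruct (Nat.eqb_spec i n).
    - subst. auto.
    - rewrite d_refl by auto. unfold Rmin. destruct (Rle_dec 1 0); [lra|]. ring. }
  destruct (sup_real _ 1 (cterm_le1 Xs (pts (prodNS Xs) (sgc n a)) (pts (prodNS Xs) (sgc n b)))) as [L U].
  apply Rle_antisym.
  - apply U. intro i. rewrite T. destruct (Nat.eqb i n); lra.
  - specialize (L n). rewrite T, Nat.eqb_refl in L. auto.
Qed.

Definition ENT (c n : ex) : ex := Mul (Ltb n (U1 c)) (CE (U2 c) n).
Definition SGC (n a : ex) : ex := Pr (Add n (K 1)) (SG n a).
Lemma sem_ENT c n v : sem (ENT c n) v = ent (sem c v) (sem n v).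
Proof. unfold ENT. cbn [sem]. rewrite sem_Ltb. unfold ent. destruct (Nat.ltb _ _); lia. Qed.
Lemma sem_SGC n a v : sem (SGC n a) v = sgc (sem n v) (sem a v).
Proof. reflexivity. Qed.
Lemma wf_ENT c n : wf c -> wf n -> wf (ENT c n).
Proof. unfold ENT, Ltb. cbn. tauto. Qed.
Lemma wf_SGC n a : wf n -> wf a -> wf (SGC n a).
Proof. unfold SGC. cbn. tauto. Qed.

Lemma nbhd_3 N W s n x y : nbhd (prodS N (prodS W W)) s (n, (x, y)) <->
  dist N (pts N (u1 (u1 s))) n < qq s /\ dist W (pts W (u1 (u2 (u1 s)))) x < qq s /\
  dist W (pts W (u2 (u2 (u1 s)))) y < qq s.
Proof. rewrite nbhd_prod, dist_prod_lt. tauto. Qed.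

Lemma natS_close a b q : dist natS a b < q -> q <= 1 -> a = b.
Proof. cbn. destruct (Nat.eqb_spec a b); auto. lra. Qed.
Lemma natS_refl a : dist natS a a = 0.
Proof. cbn. rewrite Nat.eqb_refl. auto. Qed.

Lemma qq_le1 s : (u1 (u2 s) <= u2 (u2 s) + 1)%nat -> qq s <= 1.
Proof. intro H. unfold qq. rewrite <- rat_1. apply rat_le_iff. lia. Qed.

Lemma coord_neq_sigma Xs : (forall i, is_RPS (Xs i)) -> is_RPS (prodNS Xs) ->
  Sigma01 (prodS natS (prodS (prodNS Xs) (prodNS Xs)))
    (fun p => ~ (fst (snd p) (fst p) = snd (snd p) (fst p))).
Proof.
  intros HX HN. set (PN := prodNS Xs). assert (MX : forall i, is_metric (Xs i)) by (intro; apply metric_of; auto).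
  destruct (rlt_prf PN HN) as [pL HL].
  set (S := V 1). set (N' := U1 (U1 S)). set (Cc := U1 (U2 (U1 S))). set (Ce := U2 (U2 (U1 S))).
  set (M' := U1 (U2 S)). set (K' := U2 (U2 S)).
  set (e := Mul (Leb M' (Add K' (K 1))) (Not (Call pL (chi (PLt PN)) (SGC N' (ENT Cc N')) (SGC N' (ENT Ce N')) (Mul (K 2) M') K'))).
  apply (sigma_ex _ _ e).
  { unfold e. repeat (first [exact HL | exact I | apply wf_SGC | apply wf_ENT | split | progress (unfold Leb, Ltb, Not, S, N', Cc, Ce, M', K'; cbn [wf])]). }
  assert (KS : forall w s, sem e [w; s] <> 0%nat <->
     (u1 (u2 s) <= u2 (u2 s) + 1)%nat /\
     ~ (dist PN (pts PN (sgc (u1 (u1 s)) (ent (u1 (u2 (u1 s))) (u1 (u1 s)))))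
                (pts PN (sgc (u1 (u1 s)) (ent (u2 (u2 (u1 s))) (u1 (u1 s))))) < 2 * qq s)).
  { intros w s. unfold e, Not, N', Cc, Ce, M', K', S. cbn [sem]. rewrite sem_Leb, !sem_SGC, !sem_ENT. cbn [sem nth].
    match goal with |- context [chi ?P1 ?l1] => destruct (chi_case P1 l1) as [[A1 B1]|[A1 B1]]; rewrite B1;
      unfold PLt in A1; cbn [nth] in A1 end; rewrite rat_2 in A1; fold PN in A1; unfold qq;
    destruct (Nat.leb_spec (u1 (u2 s)) (u2 (u2 s) + 1)); split; intros; try tauto; try lia. }
  intros [n0 [x y]]. cbn [fst snd]. split.
  - intro Hne.
    set (dd := dist (Xs n0) (x n0) (y n0)).
    assert (Hd : 0 < dd).
    { destruct (d_nonneg _ (MX n0) (x n0) (y n0)) as [H|H]; auto. exfalso. apply Hne. apply (d_eq _ (MX n0)). auto. }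
    set (delta := (/ 2) ^ n0 * Rmin 1 dd).
    assert (Hdelta : 0 < delta).
    { unfold delta. apply Rmult_lt_0_compat. apply pow_half_pos. unfold Rmin. destruct (Rle_dec 1 dd); lra. }
    destruct (arch_rat_small (delta / 4)) as [k [Hk Hk1]]; [lra|].
    destruct (dense_rad PN HN x 1 k) as [c Hc]; [lia|].
    destruct (dense_rad PN HN y 1 k) as [d Hd2]; [lia|].
    exists (pair (pair n0 (pair c d)) (pair 1 k)). split.
    + exists 0%nat. apply KS. sp. split; [lia|].
      rewrite (qq_code _ 1 k). unfold PN. rewrite dist_sgc by auto. intro Hlt.
      pose proof (coord_le Xs (pts PN c) x n0) as T1. pose proof (coord_le Xs (pts PN d) y n0) as T2.
      unfold cterm in T1, T2. unfold PN in T1, T2, Hc, Hd2. rewrite pts_N in T1, T2.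
      set (al := pts (Xs n0) (ent c n0)) in *. set (be := pts (Xs n0) (ent d n0)) in *.
      pose proof (pow_half_pos n0) as Pp.
      assert (R1 : Rmin 1 dd <= Rmin 1 (dist (Xs n0) al (x n0)) + Rmin 1 (dist (Xs n0) al (y n0))).
      { apply rmin_sub; try apply d_nonneg; auto. rewrite (d_sym _ (MX n0) al (x n0)). apply d_tri; auto. }
      assert (R2 : Rmin 1 (dist (Xs n0) al (y n0)) <= Rmin 1 (dist (Xs n0) al be) + Rmin 1 (dist (Xs n0) be (y n0))).
      { apply rmin_sub; try apply d_nonneg; auto. apply d_tri; auto. }
      assert (delta <= (/ 2) ^ n0 * Rmin 1 (dist (Xs n0) al (x n0)) + (/ 2) ^ n0 * Rmin 1 (dist (Xs n0) al be)
                        + (/ 2) ^ n0 * Rmin 1 (dist (Xs n0) be (y n0))).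
      { unfold delta. rewrite <- !Rmult_plus_distr_l. apply Rmult_le_compat_l; lra. }
      lra.
    + apply nbhd_3. rewrite (qq_code _ 1 k). sp. split; [|split; auto].
      cbn [pts natS]. rewrite natS_refl. apply rat_pos. lia.
  - intros [s [[w Hw] Hn]] Heq. apply KS in Hw. destruct Hw as [Hm Hw].
    apply nbhd_3 in Hn. destruct Hn as (H0 & H1 & H2).
    pose proof (qq_le1 s Hm) as Q1. cbn [pts natS] in H0. apply natS_close in H0; auto. rewrite H0 in Hw.
    apply Hw. unfold PN. rewrite dist_sgc by auto.
    pose proof (coord_le Xs (pts PN (u1 (u2 (u1 s)))) x n0) as T1.
    pose proof (coord_le Xs (pts PN (u2 (u2 (u1 s)))) y n0) as T2.
    unfold cterm in T1, T2. unfold PN in T1, T2, H1, H2. rewrite pts_N in T1, T2.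
    set (al := pts (Xs n0) (ent (u1 (u2 (u1 s))) n0)) in *. set (be := pts (Xs n0) (ent (u2 (u2 (u1 s))) n0)) in *.
    pose proof (pow_half_pos n0) as Pp.
    assert (R1 : Rmin 1 (dist (Xs n0) al be) <= Rmin 1 (dist (Xs n0) al (x n0)) + Rmin 1 (dist (Xs n0) be (y n0))).
    { apply rmin_sub; try apply d_nonneg; auto. rewrite Heq, (d_sym _ (MX n0) be (y n0)). apply d_tri; auto. }
    assert ((/ 2) ^ n0 * Rmin 1 (dist (Xs n0) al be) <= (/ 2) ^ n0 * Rmin 1 (dist (Xs n0) al (x n0)) + (/ 2) ^ n0 * Rmin 1 (dist (Xs n0) be (y n0))).
    { rewrite <- Rmult_plus_distr_l. apply Rmult_le_compat_l; lra. }
    lra.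
Qed.

Lemma INR_pow2 n : INR (2 ^ n) = 2 ^ n.
Proof. rewrite pow_INR. simpl. f_equal. Qed.

Lemma rat_pow n m k : rat_of (2 ^ n * m) k = 2 ^ n * rat_of m k.
Proof. unfold rat_of, Rdiv. rewrite mult_INR, INR_pow2. ring. Qed.

Lemma rat_arith n m k m' k' : (2 ^ n * m' * (k + 1) <= m * (k' + 1))%nat ->
  rat_of (m * (k' + 1) - 2 ^ n * m' * (k + 1)) ((k + 1) * (k' + 1) - 1) = rat_of m k - 2 ^ n * rat_of m' k'.
Proof.
  intro H. unfold rat_of. replace (S ((k + 1) * (k' + 1) - 1)) with ((k + 1) * (k' + 1))%nat by nia.
  rewrite minus_INR by auto. rewrite !mult_INR, !plus_INR, INR_pow2, !S_INR. simpl.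
  field. split; pose proof (pos_INR k); pose proof (pos_INR k'); lra.
Qed.

Lemma ev_comp X : is_RPS X -> is_RPS (prodNS (fun _ => X)) ->
  computable (prodS natS (prodS (prodNS (fun _ => X)) (prodNS (fun _ => X)))) (prodS X X)
    (fun p => (fst (snd p) (fst p), snd (snd p) (fst p))).
Proof.
  intros HX HN. set (PN := prodNS (fun _ => X)). pose proof (metric_of X HX) as MX.
  destruct (rle_prf X HX) as [pL HL].
  set (S := U1 (V 1)). set (T := U2 (V 1)).
  set (a := U1 (U1 S)). set (b := U2 (U1 S)). set (m := U1 (U2 S)). set (k := U2 (U2 S)).
  set (n' := U1 (U1 T)). set (c := U1 (U2 (U1 T))). set (d := U2 (U2 (U1 T))). set (m' := U1 (U2 T)). set (k' := U2 (U2 T)).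
  set (A := Mul (Mul (P2 n') m') (Add k (K 1))). set (B := Mul m (Add k' (K 1))).
  set (M := Sub B A). set (KK := Sub (Mul (Add k (K 1)) (Add k' (K 1))) (K 1)).
  set (e := Mul (Mul (Leb (Mul (P2 n') m') (Add k' (K 1))) (Leb A B))
                (Mul (Call pL (chi (PLe X)) a (ENT c n') M KK) (Call pL (chi (PLe X)) b (ENT d n') M KK))).
  apply (computable_ex _ _ _ e).
  { unfold e. repeat (first [exact HL | exact I | apply wf_ENT | split |
       progress (unfold Leb, Ltb, Not, S, T, a, b, m, k, n', c, d, m', k', A, B, M, KK; cbn [wf])]). }
  assert (KS : forall w s t, sem e [w; pair s t] <> 0%nat <->
     (2 ^ u1 (u1 t) * u1 (u2 t) <= u2 (u2 t) + 1)%nat /\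
     (2 ^ u1 (u1 t) * u1 (u2 t) * (u2 (u2 s) + 1) <= u1 (u2 s) * (u2 (u2 t) + 1))%nat /\
     dist X (pts X (u1 (u1 s))) (pts X (ent (u1 (u2 (u1 t))) (u1 (u1 t)))) <=
       rat_of (u1 (u2 s) * (u2 (u2 t) + 1) - 2 ^ u1 (u1 t) * u1 (u2 t) * (u2 (u2 s) + 1))
              ((u2 (u2 s) + 1) * (u2 (u2 t) + 1) - 1) /\
     dist X (pts X (u2 (u1 s))) (pts X (ent (u2 (u2 (u1 t))) (u1 (u1 t)))) <=
       rat_of (u1 (u2 s) * (u2 (u2 t) + 1) - 2 ^ u1 (u1 t) * u1 (u2 t) * (u2 (u2 s) + 1))
              ((u2 (u2 s) + 1) * (u2 (u2 t) + 1) - 1)).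
  { intros w s t. unfold e, M, KK, A, B, a, b, m, k, n', c, d, m', k', S, T. cbn [sem].
    rewrite !sem_Leb, !sem_ENT. cbn [sem nth]. sp.
    match goal with |- context [Nat.mul (chi ?P1 ?l1) (chi ?P2 ?l2)] =>
      destruct (chi_case P1 l1) as [[A1 B1]|[A1 B1]]; destruct (chi_case P2 l2) as [[A2 B2]|[A2 B2]];
      rewrite B1, B2; unfold PLe in A1, A2; cbn [nth] in A1, A2 end;
    destruct (Nat.leb_spec (2 ^ u1 (u1 t) * u1 (u2 t)) (u2 (u2 t) + 1));
    destruct (Nat.leb_spec (2 ^ u1 (u1 t) * u1 (u2 t) * (u2 (u2 s) + 1)) (u1 (u2 s) * (u2 (u2 t) + 1)));
    split; intros; try tauto; try lia. }
  intros [n0 [x y]] s. cbn [fst snd]. rewrite nbhd_prod. split.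
  - intros [H1 H2].
    set (q := qq s) in *. set (d1 := dist X (pts X (u1 (u1 s))) (x n0)) in *.
    set (d2 := dist X (pts X (u2 (u1 s))) (y n0)) in *.
    set (eps := Rmin (q - d1) (q - d2)).
    assert (He : 0 < eps) by (unfold eps, Rmin; destruct (Rle_dec (q - d1) (q - d2)); lra).
    assert (He1 : eps <= q - d1 /\ eps <= q - d2) by (unfold eps, Rmin; destruct (Rle_dec (q - d1) (q - d2)); lra).
    assert (P1 : 1 <= 2 ^ n0). { clear. induction n0; simpl; lra. }
    set (P := 2 ^ n0) in *.
    assert (Hr : 0 < Rmin eps 1 / (2 * P)).
    { apply Rdiv_lt_0_compat; [|lra]. unfold Rmin; destruct (Rle_dec eps 1); lra. }
    destruct (arch_rat _ Hr) as [k0 Hk].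
    assert (Hk2 : 2 * P * rat_of 1 k0 < Rmin eps 1).
    { apply (Rmult_lt_compat_l (2 * P)) in Hk; [|lra].
      assert (E : 2 * P * (Rmin eps 1 / (2 * P)) = Rmin eps 1) by (field; lra). lra. }
    assert (Rm1 : Rmin eps 1 <= eps /\ Rmin eps 1 <= 1) by (split; [apply Rmin_l|apply Rmin_r]).
    pose proof (rat_nonneg 1 k0) as Q0.
    assert (Pq : P * rat_of 1 k0 <= 1) by lra.
    destruct (dense_rad PN HN x 1 k0) as [c0 Hc]; [lia|].
    destruct (dense_rad PN HN y 1 k0) as [e0 He0]; [lia|].
    exists (pair (pair n0 (pair c0 e0)) (pair 1 k0)). split.
    + exists 0%nat. apply KS. sp.
      assert (A1 : (2 ^ n0 * 1 <= k0 + 1)%nat).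
      { assert (rat_of (2 ^ n0 * 1) k0 <= rat_of 1 0) by (rewrite rat_pow, rat_1; fold P; lra).
        apply rat_le_iff in H. lia. }
      assert (A2 : (2 ^ n0 * 1 * (u2 (u2 s) + 1) <= u1 (u2 s) * (k0 + 1))%nat).
      { assert (rat_of (2 ^ n0 * 1) k0 <= rat_of (u1 (u2 s)) (u2 (u2 s))).
        { rewrite rat_pow. fold P. change (rat_of (u1 (u2 s)) (u2 (u2 s))) with q.
          pose proof (d_nonneg X MX (pts X (u1 (u1 s))) (x n0)). fold d1 in H. lra. }
        apply rat_le_iff in H. lia. }
      split; [auto|split; [auto|]].
      rewrite rat_arith by exact A2. change (rat_of (u1 (u2 s)) (u2 (u2 s))) with q. fold P.
      assert (Pq' : 2 ^ n0 * rat_of 1 k0 <= 1) by (fold P; lra).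
      pose proof (coord_lt (fun _ => X) _ _ n0 _ Hc Pq') as D1.
      pose proof (coord_lt (fun _ => X) _ _ n0 _ He0 Pq') as D2.
      unfold PN in D1, D2. rewrite pts_N in D1, D2. cbv beta in D1, D2. fold P in D1, D2.
      pose proof (d_tri X MX (pts X (u1 (u1 s))) (x n0) (pts X (ent c0 n0))).
      pose proof (d_tri X MX (pts X (u2 (u1 s))) (y n0) (pts X (ent e0 n0))).
      rewrite (d_sym X MX (x n0)) in *. rewrite (d_sym X MX (y n0)) in *.
      fold d1 d2 in H, H0. split; lra.
    + apply nbhd_3. sp. rewrite qq_code. split; [|split; auto].
      cbn [pts natS]. rewrite natS_refl. apply rat_pos. lia.
  - intros [t [[w Hw] Ht]]. apply KS in Hw. destruct Hw as (C1 & C2 & C3 & C4).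
    apply nbhd_3 in Ht. destruct Ht as (H0 & H1 & H2).
    rewrite rat_arith in C3, C4 by exact C2.
    change (rat_of (u1 (u2 s)) (u2 (u2 s))) with (qq s) in C3, C4.
    change (rat_of (u1 (u2 t)) (u2 (u2 t))) with (qq t) in C3, C4.
    assert (Pq : 2 ^ u1 (u1 t) * qq t <= 1).
    { unfold qq. rewrite <- rat_pow, <- rat_1. apply rat_le_iff. lia. }
    assert (P1 : 1 <= 2 ^ u1 (u1 t)). { clear. induction (u1 (u1 t)); simpl; lra. }
    pose proof (rat_nonneg (u1 (u2 t)) (u2 (u2 t))) as Q0. fold (qq t) in Q0.
    cbn [pts natS] in H0. apply natS_close in H0; [|nra]. rewrite H0 in *.
    pose proof (coord_lt (fun _ => X) _ _ n0 _ H1 Pq) as D1.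
    pose proof (coord_lt (fun _ => X) _ _ n0 _ H2 Pq) as D2.
    unfold PN in D1, D2. rewrite pts_N in D1, D2. cbv beta in D1, D2.
    pose proof (d_tri X MX (pts X (u1 (u1 s))) (pts X (ent (u1 (u2 (u1 t))) n0)) (x n0)).
    pose proof (d_tri X MX (pts X (u2 (u1 s))) (pts X (ent (u2 (u2 (u1 t))) n0)) (y n0)).
    split; lra.
Qed.

Lemma PG2_in (Gm : pointclass)
  (HS : contains_Sigma01 Gm) (HP : contains_Pi01 Gm)
  (Hor : pc_closed_or Gm) (Hand : pc_closed_and Gm) (Hsub : pc_closed_comp_subst Gm)
  X Y GX GY : is_RPS X -> is_RPS Y -> graph_in Gm X GX -> graph_in Gm Y GY ->
  graph_in Gm (prodS X Y) (PG2 GX GY).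
Proof.
  intros HX HY IX IY.
  pose proof (prodS_RPS X Y HX HY) as HZ.
  pose proof (prodS_RPS _ _ HZ HZ) as HW.
  pose proof (prodS_RPS _ _ HX HX) as HXX.
  pose proof (prodS_RPS _ _ HY HY) as HYY.
  pose proof (HS _ HW _ (diag_sigma _ HZ)) as A.
  pose proof (Hor _ HXX _ _ IX (HP _ HXX _ (diag_sigma _ HX))) as BX.
  pose proof (Hor _ HYY _ _ IY (HP _ HYY _ (diag_sigma _ HY))) as BY.
  pose proof (Hsub _ _ HW HXX _ _ (pi1_comp X Y HX HY) BX) as BX'.
  pose proof (Hsub _ _ HW HYY _ _ (pi2_comp X Y HX HY) BY) as BY'.
  pose proof (Hand _ HW _ _ A (Hand _ HW _ _ BX' BY')) as R.
  exact R.
Qed.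

Lemma part_ii (Gm : pointclass)
  (HS : contains_Sigma01 Gm) (HP : contains_Pi01 Gm)
  (Hor : pc_closed_or Gm) (Hand : pc_closed_and Gm) (Hsub : pc_closed_comp_subst Gm)
  (Xs : nat -> space) (Es : forall i, carrier (Xs i) -> carrier (Xs i) -> Prop)
          (Gs : forall i, carrier (Xs i) -> carrier (Xs i) -> Prop) (d : nat -> nat) :
      (forall i, is_RPS (Xs i)) -> (forall i, is_equiv (Es i)) ->
      is_RPS (prodNS Xs) ->
      (forall i, graphing (Gs i) (Es i)) ->
      (forall i, has_diameter (Gs i) (d i)) ->
      Gm (prodS natS (prodS (prodNS Xs) (prodNS Xs)))
         (fun p => Gs (fst p) (fst (snd p) (fst p)) (snd (snd p) (fst p))) ->
      (exists B, forall i, (d i <= B)%nat) ->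
      exists m, (forall i, (d i <= m)%nat) /\ (exists i, d i = m) /\
        graphable_diam (forallN Gm) (prodNS Xs) (prodN_rel Es) m.
Proof.
  intros HXs QE HN HG HD HGm [B HB].
  destruct (bounded_max d B HB) as [m [Hm [i0 Hi0]]].
  exists m. split; auto. split; [eauto|].
  destruct (part_ii_graph Gs Es d m i0 (fun i => pts (Xs i) 0%nat) QE HG HD Hm Hi0) as [GR DM].
  exists (PGN Gs). split; [exact GR|split; [|exact DM]].
  set (PN := prodNS Xs).
  pose proof (prodS_RPS _ _ HN HN) as HW.
  pose proof (prodS_RPS _ _ natS_RPS HW) as H3.
  pose proof (Hsub _ _ H3 HW _ _ (snd_comp natS _ natS_RPS HW) (HS _ HW _ (diag_sigma _ HN))) as A.
  pose proof (Hor _ H3 _ _ HGm (HP _ H3 _ (coord_neq_sigma Xs HXs HN))) as Bq.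
  pose proof (Hand _ H3 _ _ A Bq) as R.
  unfold graph_in, forallN. eexists. split; [exact R|].
  intros [x y]. cbn beta. cbn [fst snd]. split.
  - intros [H1 H2] n. split; auto. destruct (H2 n); [left|right]; auto.
  - intro H. split; [apply (H 0%nat)|]. intro n. destruct (H n) as [_ [H'|H']]; [left|right]; auto.
Qed.

Theorem proposition2p8 (Gm : pointclass)
  (HS : contains_Sigma01 Gm) (HP : contains_Pi01 Gm)
  (Hor : pc_closed_or Gm) (Hand : pc_closed_and Gm) (Hsub : pc_closed_comp_subst Gm) :
  (* (i) *)
  (forall (X Y : space) (E : carrier X -> carrier X -> Prop)
          (F : carrier Y -> carrier Y -> Prop),
      is_RPS X -> is_RPS Y -> is_equiv E -> is_equiv F ->
      (graphable Gm X E -> graphable Gm Y F ->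
         graphable Gm (prodS X Y) (prod_rel E F)) /\
      (forall k l : nat, graphable_diam Gm X E k -> graphable_diam Gm Y F l ->
         graphable_diam Gm (prodS X Y) (prod_rel E F) (Nat.max k l)))
  /\
  (* (ii) *)
  (forall (Xs : nat -> space) (Es : forall i, carrier (Xs i) -> carrier (Xs i) -> Prop)
          (Gs : forall i, carrier (Xs i) -> carrier (Xs i) -> Prop) (d : nat -> nat),
      (forall i, is_RPS (Xs i)) -> (forall i, is_equiv (Es i)) ->
      is_RPS (prodNS Xs) ->
      (forall i, graphing (Gs i) (Es i)) ->
      (forall i, has_diameter (Gs i) (d i)) ->
      Gm (prodS natS (prodS (prodNS Xs) (prodNS Xs)))
         (fun p => Gs (fst p) (fst (snd p) (fst p)) (snd (snd p) (fst p))) ->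
      (exists B, forall i, (d i <= B)%nat) ->
      exists m, (forall i, (d i <= m)%nat) /\ (exists i, d i = m) /\
        graphable_diam (forallN Gm) (prodNS Xs) (prodN_rel Es) m)
  /\
  (* (ii), in particular *)
  (forall (X : space) (E : carrier X -> carrier X -> Prop) (k : nat),
      is_RPS X -> is_equiv E -> is_RPS (prodNS (fun _ => X)) ->
      graphable_diam Gm X E k ->
      graphable_diam (forallN Gm) (prodNS (fun _ => X))
        (prodN_rel (fun _ => E)) k).
Proof.
  split; [|split].
  - intros X Y E F HX HY QE QF. split.
    + intros [GX [HGX IX]] [GY [HGY IY]]. exists (PG2 GX GY). split.
      * apply (part_i_graph GX E GY F (pts X 0%nat) (pts Y 0%nat) QE QF HGX HGY).
      * apply PG2_in; auto.
    + intros k l [GX [HGX [IX DX]]] [GY [HGY [IY DY]]]. exists (PG2 GX GY).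
      destruct (part_i_graph GX E GY F (pts X 0%nat) (pts Y 0%nat) QE QF HGX HGY) as [G1 G2].
      split; [auto|split; [apply PG2_in; auto|auto]].
  - apply part_ii; auto.
  - intros X E k HX QE HN [G [HG [IG DG]]].
    pose proof (prodS_RPS _ _ HN HN) as HW.
    pose proof (prodS_RPS _ _ natS_RPS HW) as H3.
    pose proof (prodS_RPS _ _ HX HX) as HXX.
    pose proof (Hsub _ _ H3 HXX _ _ (ev_comp X HX HN) IG) as R.
    destruct (part_ii Gm HS HP Hor Hand Hsub (fun _ => X) (fun _ => E) (fun _ => G) (fun _ => k)
       (fun _ => HX) (fun _ => QE) HN (fun _ => HG) (fun _ => DG) R (ex_intro _ k (fun _ => le_n k)))
      as [m [_ [[i Hi] Hg]]].
    rewrite Hi. exact Hg.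
Qed.
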